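(* Let $\tau\in\mathcal{H}$ with $\Im(\tau)\ge\sqrt3/4$, let $z\in\mathbb{C}$ with $0\le\Im(z)\le\Im(\tau)/4$, and let $\lambda,\mu\in\mathbb{C}\setminus\{0\}$. Then $F^\infty$ is defined at the given point and $$F^{\infty}\left(\lambda\theta_{00}^2(z,\tau),\ \lambda\theta_{01}^2(z,\tau),\ \mu\theta_{00}^2(0,\tau),\ \mu\theta_{01}^2(0,\tau)\right)=(\lambda,\mu).$$ In particular $$F^{\infty}\left(1,\frac{\theta_{01}^2(z,\tau)}{\theta_{00}^2(z,\tau)},1,\frac{\theta_{01}^2(0,\tau)}{\theta_{00}^2(0,\tau)}\right)=\left(\frac{1}{\theta_{00}^2(z,\tau)},\frac{1}{\theta_{00}^2(0,\tau)}\right).$$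
   Context: For $z\in\mathbb{C}$ and $\tau$ in the upper half-plane $\mathcal{H}=\{\tau\in\mathbb{C}:\Im\tau>0\}$, $\theta(z,\tau)=\sum_{n\in\mathbb{Z}}\exp(\pi i\tau n^2+2\pi i n z)$; $\theta_{00}(z,\tau)=\theta(z,\tau)$, $\theta_{01}(z,\tau)=\theta(z+\tfrac12,\tau)$. Optimal F sequence: given $(x_0,y_0,z_0,t_0)\in\mathbb{C}^4$, define recursively $$(x_{n+1},y_{n+1},z_{n+1},t_{n+1})=\Big(\tfrac{\sqrt{x_n}\sqrt{z_n}+\sqrt{y_n}\sqrt{t_n}}{2},\ \tfrac{\sqrt{x_n}\sqrt{t_n}+\sqrt{y_n}\sqrt{z_n}}{2},\ \tfrac{z_n+t_n}{2},\ \sqrt{z_n}\sqrt{t_n}\Big),$$ with square roots chosen ''good'': $\Re\sqrt{x_n}\ge0$, $\Re\sqrt{z_n}\ge0$; either $|\sqrt{x_n}-\sqrt{y_n}|<|\sqrt{x_n}+\sqrt{y_n}|$ or equality and $\Im(\sqrt{y_n}/\sqrt{x_n})>0$; either $|\sqrt{z_n}-\sqrt{t_n}|<|\sqrt{z_n}+\sqrt{t_n}|$ or equality and $\Im(\sqrt{t_n}/\sqrt{z_n})>0$. When $z_\infty=\lim_n z_n$ exists and is nonzero and $\lim_n(x_n/z_\infty)^{2^n}$ exists, set $F^\infty(x_0,y_0,z_0,t_0)=\big(z_\infty\lim_n(x_n/z_\infty)^{2^n},\ z_\infty\big)$. *)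

(* Defs.v *)
From Stdlib Require Import Reals ZArith ClassicalEpsilon.
Open Scope R_scope.

Record Cplx : Type := mkC { Re : R; Im : R }.

Definition RtoC (a : R) : Cplx := mkC a 0.
Definition Czero : Cplx := RtoC 0.
Definition Cone : Cplx := RtoC 1.
Definition Ci : Cplx := mkC 0 1.
Definition Cadd (u v : Cplx) : Cplx := mkC (Re u + Re v) (Im u + Im v).
Definition Copp (u : Cplx) : Cplx := mkC (- Re u) (- Im u).
Definition Csub (u v : Cplx) : Cplx := Cadd u (Copp v).
Definition Cmul (u v : Cplx) : Cplx :=
  mkC (Re u * Re v - Im u * Im v) (Re u * Im v + Im u * Re v).
Definition Cinv (u : Cplx) : Cplx :=
  mkC (Re u / (Re u ^ 2 + Im u ^ 2)) (- Im u / (Re u ^ 2 + Im u ^ 2)).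
Definition Cdiv (u v : Cplx) : Cplx := Cmul u (Cinv v).
Definition Cnorm (u : Cplx) : R := sqrt (Re u ^ 2 + Im u ^ 2).
Fixpoint Cpow (u : Cplx) (n : nat) : Cplx :=
  match n with O => Cone | S m => Cmul u (Cpow u m) end.
Definition Cexp (u : Cplx) : Cplx := mkC (exp (Re u) * cos (Im u)) (exp (Re u) * sin (Im u)).

Definition Ccv (u : nat -> Cplx) (l : Cplx) : Prop :=
  forall eps : R, eps > 0 -> exists N : nat, forall n : nat, (n >= N)%nat ->
    Cnorm (Csub (u n) l) < eps.

Definition Cinhabited : inhabited Cplx := inhabits Czero.
Definition Clim (u : nat -> Cplx) : Cplx := epsilon Cinhabited (fun l => Ccv u l).

Fixpoint Csum (f : nat -> Cplx) (m : nat) : Cplx :=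
  match m with O => Czero | S k => Cadd (Csum f k) (f k) end.

Definition theta_term (z tau : Cplx) (n : Z) : Cplx :=
  Cexp (Cadd (Cmul (RtoC (PI * IZR n ^ 2)) (Cmul Ci tau))
             (Cmul (RtoC (2 * PI * IZR n)) (Cmul Ci z))).

(* symmetric partial sums  sum_{n=-N}^{N} *)
Definition theta_psum (z tau : Cplx) (N : nat) : Cplx :=
  Csum (fun k => theta_term z tau (Z.of_nat k - Z.of_nat N)%Z) (2 * N + 1).

Definition theta (z tau : Cplx) : Cplx := Clim (theta_psum z tau).
Definition theta00 (z tau : Cplx) : Cplx := theta z tau.
Definition theta01 (z tau : Cplx) : Cplx := theta (Cadd z (RtoC (1/2))) tau.

Definition good_pair (a b sa sb : Cplx) : Prop :=
  Cmul sa sa = a /\ Cmul sb sb = b /\ Re sa >= 0 /\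
  (Cnorm (Csub sa sb) < Cnorm (Cadd sa sb) \/
   (Cnorm (Csub sa sb) = Cnorm (Cadd sa sb) /\ Im (Cdiv sb sa) > 0)).

Definition half (u : Cplx) : Cplx := Cdiv u (RtoC 2).

Definition good_step (x y z t x' y' z' t' : Cplx) : Prop :=
  exists sx sy sz st : Cplx,
    good_pair x y sx sy /\ good_pair z t sz st /\
    x' = half (Cadd (Cmul sx sz) (Cmul sy st)) /\
    y' = half (Cadd (Cmul sx st) (Cmul sy sz)) /\
    z' = half (Cadd z t) /\
    t' = Cmul sz st.

Definition good_F_seq (x0 y0 z0 t0 : Cplx) (x y z t : nat -> Cplx) : Prop :=
  x 0%nat = x0 /\ y 0%nat = y0 /\ z 0%nat = z0 /\ t 0%nat = t0 /\
  forall n : nat, good_step (x n) (y n) (z n) (t n)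
                            (x (S n)) (y (S n)) (z (S n)) (t (S n)).

Definition Finf_eq (x0 y0 z0 t0 a b : Cplx) : Prop :=
  (exists x y z t : nat -> Cplx, good_F_seq x0 y0 z0 t0 x y z t) /\
  forall x y z t : nat -> Cplx, good_F_seq x0 y0 z0 t0 x y z t ->
    exists zinf L : Cplx,
      Ccv z zinf /\ zinf <> Czero /\
      Ccv (fun n => Cpow (Cdiv (x n) zinf) (2 ^ n)) L /\
      a = Cmul zinf L /\ b = zinf.

(* Main.v *)
Require Import Defs.
From Stdlib Require Import Reals ZArith Lra Lia Psatz Field Ring ClassicalEpsilon.
Open Scope R_scope.


Lemma Ceq (u v : Cplx) : Re u = Re v -> Im u = Im v -> u = v.
Proof. destruct u, v; simpl; intros; subst; auto. Qed.

Lemma Cring_th : ring_theory Czero Cone Cadd Cmul Csub Copp (@eq Cplx).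
Proof.
  constructor; intros; apply Ceq; destruct x; try destruct y; try destruct z;
  unfold Cadd, Cmul, Csub, Copp, Czero, Cone, RtoC; simpl; ring.
Qed.
Add Ring Cring : Cring_th.

Lemma Cfield_th : field_theory Czero Cone Cadd Cmul Csub Copp Cdiv Cinv (@eq Cplx).
Proof.
  constructor.
  - exact Cring_th.
  - intro H. injection H. lra.
  - reflexivity.
  - intros [a b] Hp.
    assert (a ^ 2 + b ^ 2 <> 0).
    { intro H. apply Hp. assert (a = 0) by nra. assert (b = 0) by nra. subst. reflexivity. }
    apply Ceq; unfold Cmul, Cinv, Cone, RtoC; simpl.
    + field; try nra.
    + field; try nra.
Qed.
Add Field Cfield : Cfield_th.

Goal forall a b : Cplx, b <> Czero -> Cmul (Cdiv a b) b = a.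
Proof. intros. field. auto. Qed.


Lemma Cnorm_ge0 u : 0 <= Cnorm u.
Proof. unfold Cnorm. apply sqrt_pos. Qed.

Lemma Cnorm_sq u : Cnorm u * Cnorm u = Re u ^ 2 + Im u ^ 2.
Proof. unfold Cnorm. apply sqrt_sqrt. nra. Qed.

Lemma Cnorm_mul u v : Cnorm (Cmul u v) = Cnorm u * Cnorm v.
Proof.
  unfold Cnorm. rewrite <- sqrt_mult by nra. f_equal.
  destruct u, v; simpl. ring.
Qed.

Lemma Cnorm_eq0 u : Cnorm u = 0 -> u = Czero.
Proof.
  intro H. pose proof (Cnorm_sq u) as E. rewrite H in E.
  destruct u as [a b]; simpl in *. assert (a = 0) by nra. assert (b = 0) by nra.
  subst; reflexivity.
Qed.

Lemma Cnorm_pos u : u <> Czero -> 0 < Cnorm u.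
Proof. intro H. destruct (Cnorm_ge0 u) as [h|h]; auto. exfalso; apply H, Cnorm_eq0; auto. Qed.

Lemma Cnorm_le_sq u r : 0 <= r -> Re u ^ 2 + Im u ^ 2 <= r * r -> Cnorm u <= r.
Proof.
  intros Hr H. unfold Cnorm. rewrite <- (sqrt_square r) by lra. apply sqrt_le_1; nra.
Qed.

Lemma Cnorm_tri u v : Cnorm (Cadd u v) <= Cnorm u + Cnorm v.
Proof.
  apply Cnorm_le_sq. pose proof (Cnorm_ge0 u); pose proof (Cnorm_ge0 v); lra.
  pose proof (Cnorm_sq u) as Hu. pose proof (Cnorm_sq v) as Hv.
  pose proof (Cnorm_ge0 u); pose proof (Cnorm_ge0 v).
  destruct u as [a b], v as [c d]; unfold Cadd in *; cbn [Re Im] in *.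
  assert (a*c + b*d <= Cnorm {| Re := a; Im := b |} * Cnorm {| Re := c; Im := d |}).
  { set (p := Cnorm {| Re := a; Im := b |}) in *. set (q := Cnorm {| Re := c; Im := d |}) in *.
    assert (E1: (p*q)^2 = (a^2+b^2)*(c^2+d^2)) by (rewrite <- Hu, <- Hv; ring).
    assert ((a*c+b*d)^2 <= (p*q)^2) by (rewrite E1; pose proof (pow2_ge_0 (a*d-b*c)); nra).
    assert (0 <= p*q) by nra.
    destruct (Rle_dec (a*c+b*d) 0). nra.
    apply Rsqr_incr_0_var; unfold Rsqr; nra. }
  nra.
Qed.

Lemma Cnorm_opp u : Cnorm (Copp u) = Cnorm u.
Proof. unfold Cnorm; destruct u; simpl; f_equal; ring. Qed.

Lemma Cnorm_sub_sym u v : Cnorm (Csub u v) = Cnorm (Csub v u).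
Proof. replace (Csub u v) with (Copp (Csub v u)) by ring. apply Cnorm_opp. Qed.

Lemma Cnorm_tri_sub u v : Cnorm (Csub u v) <= Cnorm u + Cnorm v.
Proof. unfold Csub. rewrite <- (Cnorm_opp v). apply Cnorm_tri. Qed.

Lemma Cnorm_rev u v : Cnorm u - Cnorm v <= Cnorm (Cadd u v).
Proof.
  pose proof (Cnorm_tri (Cadd u v) (Copp v)). rewrite Cnorm_opp in H.
  replace (Cadd (Cadd u v) (Copp v)) with u in H by ring. lra.
Qed.

Lemma Cnorm_RtoC a : Cnorm (RtoC a) = Rabs a.
Proof. unfold Cnorm, RtoC; simpl. rewrite <- sqrt_Rsqr_abs. f_equal. unfold Rsqr. ring. Qed.

Lemma Cnorm_Re u : Rabs (Re u) <= Cnorm u.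
Proof.
  rewrite <- (sqrt_Rsqr_abs (Re u)). unfold Cnorm. apply sqrt_le_1. apply Rle_0_sqr. nra.
  unfold Rsqr; nra.
Qed.
Lemma Cnorm_Im u : Rabs (Im u) <= Cnorm u.
Proof.
  rewrite <- (sqrt_Rsqr_abs (Im u)). unfold Cnorm. apply sqrt_le_1. apply Rle_0_sqr. nra.
  unfold Rsqr; nra.
Qed.
Lemma Cnorm_le_ReIm u : Cnorm u <= Rabs (Re u) + Rabs (Im u).
Proof.
  apply Cnorm_le_sq. pose proof (Rabs_pos (Re u)); pose proof (Rabs_pos (Im u)); lra.
  pose proof (Rabs_pos (Re u)); pose proof (Rabs_pos (Im u)).
  pose proof (Rsqr_abs (Re u)); pose proof (Rsqr_abs (Im u)). unfold Rsqr in *. nra.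
Qed.

Lemma Cnorm_inv u : u <> Czero -> Cnorm (Cinv u) = / Cnorm u.
Proof.
  intro H. pose proof (Cnorm_pos u H).
  assert (E: Cnorm (Cmul (Cinv u) u) = 1).
  { replace (Cmul (Cinv u) u) with Cone by (field; auto). unfold Cone; rewrite Cnorm_RtoC; apply Rabs_R1. }
  rewrite Cnorm_mul in E. field_simplify_eq; lra.
Qed.

Lemma Cnorm_div u v : v <> Czero -> Cnorm (Cdiv u v) = Cnorm u / Cnorm v.
Proof. intro H. unfold Cdiv. rewrite Cnorm_mul, Cnorm_inv; auto. Qed.

Lemma Cmul_eq0 u v : Cmul u v = Czero -> u = Czero \/ v = Czero.
Proof.
  intro H. assert (Cnorm u * Cnorm v = 0). { rewrite <- Cnorm_mul, H. unfold Czero; rewrite Cnorm_RtoC. apply Rabs_R0. }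
  destruct (Rmult_integral _ _ H0); [left|right]; apply Cnorm_eq0; auto.
Qed.

Lemma Cmul_neq0 u v : u <> Czero -> v <> Czero -> Cmul u v <> Czero.
Proof. intros A B C. destruct (Cmul_eq0 _ _ C); auto. Qed.

Lemma sq_eq_cases a b : Cmul a a = Cmul b b -> a = b \/ a = Copp b.
Proof.
  intro H. assert (Cmul (Csub a b) (Cadd a b) = Czero).
  { replace (Cmul (Csub a b) (Cadd a b)) with (Csub (Cmul a a) (Cmul b b)) by ring. rewrite H. ring. }
  destruct (Cmul_eq0 _ _ H0) as [E|E]; [left|right].
  - replace a with (Cadd (Csub a b) b) by ring. rewrite E. ring.
  - replace a with (Csub (Cadd a b) b) by ring. rewrite E. ring.
Qed.

Lemma Cexp_add u v : Cexp (Cadd u v) = Cmul (Cexp u) (Cexp v).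
Proof.
  apply Ceq; unfold Cexp, Cadd, Cmul; simpl; rewrite exp_plus, ?cos_plus, ?sin_plus; ring.
Qed.

Lemma Cnorm_Cexp u : Cnorm (Cexp u) = exp (Re u).
Proof.
  unfold Cnorm, Cexp; cbn [Re Im]. replace ((exp (Re u) * cos (Im u)) ^ 2 + (exp (Re u) * sin (Im u)) ^ 2)
  with (exp (Re u) * exp (Re u)).
  apply sqrt_square. left; apply exp_pos.
  pose proof (sin2_cos2 (Im u)). unfold Rsqr in H. nra.
Qed.

Lemma Cexp_neq0 u : Cexp u <> Czero.
Proof. intro H. pose proof (Cnorm_Cexp u). unfold Czero in H; rewrite H, Cnorm_RtoC, Rabs_R0 in H0. pose proof (exp_pos (Re u)). lra. Qed.


Lemma Ccv_unique u l1 l2 : Ccv u l1 -> Ccv u l2 -> l1 = l2.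
Proof.
  intros H1 H2. destruct (Req_dec (Cnorm (Csub l1 l2)) 0) as [E|E].
  - apply Cnorm_eq0 in E. replace l1 with (Cadd (Csub l1 l2) l2) by ring. rewrite E. ring.
  - pose proof (Cnorm_ge0 (Csub l1 l2)).
    set (e := Cnorm (Csub l1 l2) / 2).
    destruct (H1 e) as [N1 HN1]. unfold e; lra. destruct (H2 e) as [N2 HN2]. unfold e; lra.
    specialize (HN1 (max N1 N2) ltac:(lia)). specialize (HN2 (max N1 N2) ltac:(lia)).
    pose proof (Cnorm_tri_sub (Csub (u (max N1 N2)) l2) (Csub (u (max N1 N2)) l1)).
    replace (Csub (Csub (u (Init.Nat.max N1 N2)) l2) (Csub (u (Init.Nat.max N1 N2)) l1)) with (Csub l1 l2) in H0 by ring.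
    unfold e in *. lra.
Qed.

Lemma Clim_eq u l : Ccv u l -> Clim u = l.
Proof.
  intro H. unfold Clim. pose proof (epsilon_spec Cinhabited (fun l => Ccv u l) (ex_intro _ l H)) as H0.
  apply (Ccv_unique u); auto.
Qed.

Lemma Ccv_by_bound u l (e : nat -> R) :
  Un_cv e 0 -> (forall n, Cnorm (Csub (u n) l) <= e n) -> Ccv u l.
Proof.
  intros He Hb eps Heps. destruct (He eps Heps) as [N HN]. exists N. intros n Hn.
  specialize (HN n Hn). unfold R_dist in HN. rewrite Rminus_0_r in HN.
  specialize (Hb n). apply Rabs_def2 in HN. lra.
Qed.

Lemma Ccv_by_bound_ev u l (e : nat -> R) N0 :
  Un_cv e 0 -> (forall n, (n >= N0)%nat -> Cnorm (Csub (u n) l) <= e n) -> Ccv u l.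
Proof.
  intros He Hb eps Heps. destruct (He eps Heps) as [N HN]. exists (max N N0). intros n Hn.
  specialize (HN n ltac:(lia)). unfold R_dist in HN. rewrite Rminus_0_r in HN.
  specialize (Hb n ltac:(lia)). apply Rabs_def2 in HN. lra.
Qed.

Lemma Ccv_limit_bound u l b B N0 :
  Ccv u l -> (forall n, (n >= N0)%nat -> Cnorm (Csub (u n) b) <= B) -> Cnorm (Csub l b) <= B.
Proof.
  intros H Hb. destruct (Rle_dec (Cnorm (Csub l b)) B) as [|n]; auto. exfalso.
  set (e := Cnorm (Csub l b) - B). destruct (H e) as [N HN]. unfold e; lra.
  specialize (HN (max N N0) ltac:(lia)). specialize (Hb (max N N0) ltac:(lia)).
  pose proof (Cnorm_tri_sub (Csub (u (max N N0)) b) (Csub (u (max N N0)) l)).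
  replace (Csub (Csub (u (max N N0)) b) (Csub (u (max N N0)) l)) with (Csub l b) in H0 by ring.
  unfold e in *. lra.
Qed.

Lemma Ccv_add u v a b : Ccv u a -> Ccv v b -> Ccv (fun n => Cadd (u n) (v n)) (Cadd a b).
Proof.
  intros Hu Hv eps He. destruct (Hu (eps/2)) as [N1 H1]. lra. destruct (Hv (eps/2)) as [N2 H2]. lra.
  exists (max N1 N2). intros n Hn. specialize (H1 n ltac:(lia)). specialize (H2 n ltac:(lia)).
  replace (Csub (Cadd (u n) (v n)) (Cadd a b)) with (Cadd (Csub (u n) a) (Csub (v n) b)) by ring.
  pose proof (Cnorm_tri (Csub (u n) a) (Csub (v n) b)). lra.
Qed.

Lemma Ccv_scal c u a : Ccv u a -> Ccv (fun n => Cmul c (u n)) (Cmul c a).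
Proof.
  intros Hu eps He. destruct (Hu (eps / (Cnorm c + 1))) as [N H1].
  pose proof (Cnorm_ge0 c). apply Rdiv_lt_0_compat; lra.
  exists N. intros n Hn. specialize (H1 n Hn).
  replace (Csub (Cmul c (u n)) (Cmul c a)) with (Cmul c (Csub (u n) a)) by ring.
  rewrite Cnorm_mul. pose proof (Cnorm_ge0 c). pose proof (Cnorm_ge0 (Csub (u n) a)).
  apply Rle_lt_trans with ((Cnorm c + 1) * Cnorm (Csub (u n) a)). nra.
  apply Rlt_le_trans with ((Cnorm c + 1) * (eps/(Cnorm c+1))). apply Rmult_lt_compat_l; lra.
  right; field; lra.
Qed.

Lemma Ccv_ext u v l : (forall n, u n = v n) -> Ccv u l -> Ccv v l.
Proof. intros E H eps He. destruct (H eps He) as [N HN]. exists N. intros. rewrite <- E; auto. Qed.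

Lemma Ccv_subseq u l (f : nat -> nat) : (forall n, (f n >= n)%nat) -> Ccv u l -> Ccv (fun n => u (f n)) l.
Proof. intros Hf H eps He. destruct (H eps He) as [N HN]. exists N. intros. apply HN. specialize (Hf n). lia. Qed.

Lemma Ccv_cauchy u (e : nat -> R) :
  Un_cv e 0 -> (forall N M, (N <= M)%nat -> Cnorm (Csub (u M) (u N)) <= e N) ->
  exists l, Ccv u l.
Proof.
  intros He Hc.
  assert (CR : forall f : Cplx -> R, (forall w, Rabs (f w) <= Cnorm w) -> (forall a b, f (Csub a b) = f a - f b) ->
     Cauchy_crit (fun n => f (u n))).
  { intros f Hf Hs eps Heps. destruct (He eps Heps) as [N HN]. exists N. intros n m Hn Hm.
    unfold R_dist. assert (Hb: forall a b, (a >= N)%nat -> (a <= b)%nat -> Rabs (f (u b) - f (u a)) < eps).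
    { intros a b Ha Hab. rewrite <- Hs. eapply Rle_lt_trans. apply Hf. eapply Rle_lt_trans. apply Hc; auto.
      specialize (HN a Ha). unfold R_dist in HN. rewrite Rminus_0_r in HN. apply Rabs_def2 in HN. lra. }
    destruct (Nat.le_ge_cases n m). rewrite Rabs_minus_sym. apply Hb; auto. apply Hb; auto. }
  destruct (R_complete _ (CR Re ltac:(apply Cnorm_Re) ltac:(reflexivity))) as [a Ha].
  destruct (R_complete _ (CR Im ltac:(apply Cnorm_Im) ltac:(reflexivity))) as [b Hb].
  exists (mkC a b). intros eps Heps. destruct (Ha (eps/2)) as [N1 H1]. lra. destruct (Hb (eps/2)) as [N2 H2]. lra.
  exists (max N1 N2). intros n Hn. specialize (H1 n ltac:(lia)). specialize (H2 n ltac:(lia)).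
  unfold R_dist in *. eapply Rle_lt_trans. apply Cnorm_le_ReIm. simpl. unfold Rminus in *. lra.
Qed.


Fixpoint bs (u : Z -> Cplx) (N : nat) : Cplx :=
  match N with
  | O => u 0%Z
  | S k => Cadd (Cadd (bs u k) (u (Z.of_nat (S k)))) (u (- Z.of_nat (S k))%Z)
  end.

Fixpoint bsR (u : Z -> R) (N : nat) : R :=
  match N with
  | O => u 0%Z
  | S k => bsR u k + u (Z.of_nat (S k)) + u (- Z.of_nat (S k))%Z
  end.

Lemma bs_ext u v N : (forall n, u n = v n) -> bs u N = bs v N.
Proof. intro E; induction N; cbn [bs]; rewrite ?IHN, ?E; auto. Qed.

Lemma bs_add u v N : bs (fun n => Cadd (u n) (v n)) N = Cadd (bs u N) (bs v N).
Proof. induction N; cbn [bs]; rewrite ?IHN; auto; ring. Qed.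

Lemma bs_scal c u N : bs (fun n => Cmul c (u n)) N = Cmul c (bs u N).
Proof. induction N; cbn [bs]; rewrite ?IHN; auto; ring. Qed.

Lemma bs_norm u N : Cnorm (bs u N) <= bsR (fun n => Cnorm (u n)) N.
Proof.
  induction N; simpl. lra.
  eapply Rle_trans. apply Cnorm_tri. eapply Rle_trans. apply Rplus_le_compat_r. apply Cnorm_tri. lra.
Qed.

Lemma bsR_le u v N : (forall n, u n <= v n) -> bsR u N <= bsR v N.
Proof. intro H; induction N; cbn [bsR]; auto. pose proof (H (Z.of_nat (S N))); pose proof (H (- Z.of_nat (S N))%Z); lra. Qed.

Lemma bsR_ge0 u N : (forall n, 0 <= u n) -> 0 <= bsR u N.
Proof. intro H; induction N; cbn [bsR]; auto. pose proof (H (Z.of_nat (S N))); pose proof (H (- Z.of_nat (S N))%Z); lra. Qed.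

Lemma bs_refl u N : bs (fun n => u (- n)%Z) N = bs u N.
Proof. induction N; cbn [bs]; rewrite ?IHN; auto. rewrite Z.opp_involutive. ring. Qed.

Lemma bs_shift1 u N : bs (fun n => u (n + 1)%Z) N = Cadd (Csub (bs u N) (u (- Z.of_nat N)%Z)) (u (Z.of_nat N + 1)%Z).
Proof.
  induction N.
  - simpl. ring.
  - change (bs (fun n => u (n + 1)%Z) (S N)) with
      (Cadd (Cadd (bs (fun n => u (n + 1)%Z) N) (u (Z.of_nat (S N) + 1)%Z)) (u (- Z.of_nat (S N) + 1)%Z)).
    rewrite IHN. cbn [bs].
    replace (- Z.of_nat (S N) + 1)%Z with (- Z.of_nat N)%Z by lia.
    replace (Z.of_nat N + 1)%Z with (Z.of_nat (S N)) by lia. ring.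
Qed.

Lemma bs_swap (G : Z -> Z -> Cplx) M K :
  bs (fun m => bs (G m) K) M = bs (fun k => bs (fun m => G m k) M) K.
Proof.
  induction M; simpl.
  - reflexivity.
  - rewrite IHM. rewrite <- !bs_add. reflexivity.
Qed.

Lemma Csum_first g m : Csum g (S m) = Cadd (g O) (Csum (fun k => g (S k)) m).
Proof. induction m. simpl. ring. change (Csum g (S (S m))) with (Cadd (Csum g (S m)) (g (S m))).
  rewrite IHm. simpl. ring. Qed.

Lemma Csum_ext g h m : (forall k, g k = h k) -> Csum g m = Csum h m.
Proof. intro E; induction m; simpl; rewrite ?IHm, ?E; auto. Qed.

Lemma psum_bs f N : Csum (fun k => f (Z.of_nat k - Z.of_nat N)%Z) (2 * N + 1) = bs f N.
Proof.
  revert f. induction N; intro f.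
  - simpl. replace (0 - 0)%Z with 0%Z by lia. ring.
  - replace (2 * S N + 1)%nat with (S (S (2 * N + 1))) by lia.
    rewrite Csum_first. change (Csum (fun k => f (Z.of_nat (S k) - Z.of_nat (S N))%Z) (S (2 * N + 1)))
      with (Cadd (Csum (fun k => f (Z.of_nat (S k) - Z.of_nat (S N))%Z) (2 * N + 1)) (f (Z.of_nat (S (2 * N + 1)) - Z.of_nat (S N))%Z)).
    rewrite (Csum_ext _ (fun k => f (Z.of_nat k - Z.of_nat N)%Z)).
    2: { intro k. f_equal. lia. }
    rewrite IHN. cbn [bs].
    replace (Z.of_nat 0 - Z.of_nat (S N))%Z with (- Z.of_nat (S N))%Z by lia.
    replace (Z.of_nat (S (2 * N + 1)) - Z.of_nat (S N))%Z with (Z.of_nat (S N)) by lia. ring.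
Qed.

Lemma bs_S u k : bs u (S k) = Cadd (Cadd (bs u k) (u (Z.of_nat (S k)))) (u (- Z.of_nat (S k))%Z).
Proof. reflexivity. Qed.

Definition sg (n : Z) : R := if Z.even n then 1 else -1.

Lemma sg_add n m : sg (n + m) = sg n * sg m.
Proof. unfold sg. rewrite Z.even_add. destruct (Z.even n), (Z.even m); simpl; ring. Qed.
Lemma sg_opp n : sg (- n) = sg n.
Proof. unfold sg. rewrite Z.even_opp. auto. Qed.
Lemma sg_sq n : sg n * sg n = 1.
Proof. unfold sg. destruct (Z.even n); ring. Qed.
Lemma sg_even k : sg (2 * k) = 1.
Proof. unfold sg. rewrite Z.even_mul. simpl. auto. Qed.
Lemma sg_odd k : sg (2 * k + 1) = -1.
Proof. unfold sg. rewrite Z.even_add, Z.even_mul. simpl. auto. Qed.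

Definition CR (a : R) (u : Cplx) : Cplx := Cmul (RtoC a) u.

Lemma bs_even u N :
  bs (fun n => CR (1 + sg n) (u n)) (2 * N) = CR 2 (bs (fun k => u (2 * k)%Z) N) /\
  bs (fun n => CR (1 + sg n) (u n)) (2 * N + 1) = CR 2 (bs (fun k => u (2 * k)%Z) N).
Proof.
  induction N.
  - simpl. unfold CR. replace (sg 0) with 1 by reflexivity.
    replace (sg 1) with (-1) by reflexivity. replace (sg (-1)) with (-1) by reflexivity.
    split; apply Ceq; simpl; ring.
  - destruct IHN as [H1 H2].
    assert (E: bs (fun n => CR (1 + sg n) (u n)) (2 * S N) = CR 2 (bs (fun k => u (2 * k)%Z) (S N))).
    { replace (2 * S N)%nat with (S (2 * N + 1)) by lia. rewrite bs_S, H2, (bs_S _ N).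
      replace (Z.of_nat (S (2 * N + 1))) with (2 * Z.of_nat (S N))%Z by lia.
      replace (- (2 * Z.of_nat (S N)))%Z with (2 * - Z.of_nat (S N))%Z by lia.
      rewrite !sg_even. unfold CR. apply Ceq; simpl; ring. }
    split; auto.
    replace (2 * S N + 1)%nat with (S (2 * S N)) by lia. rewrite bs_S, E.
    replace (Z.of_nat (S (2 * S N))) with (2 * Z.of_nat (S N) + 1)%Z by lia.
    replace (- (2 * Z.of_nat (S N) + 1))%Z with (2 * (- Z.of_nat (S N) - 1) + 1)%Z by lia.
    rewrite !sg_odd. unfold CR. apply Ceq; simpl; ring.
Qed.


Lemma pow_le_one r n : 0 <= r <= 1 -> r ^ n <= 1.
Proof. intro H; induction n; simpl. lra. pose proof (pow_le r n ltac:(lra)). nra. Qed.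

Lemma pow_decr r a b : 0 <= r <= 1 -> (a <= b)%nat -> r ^ b <= r ^ a.
Proof.
  intros Hr Hab. replace b with (a + (b - a))%nat by lia. rewrite pow_add.
  pose proof (pow_le r a ltac:(lra)). pose proof (pow_le r (b - a) ltac:(lra)).
  assert (r ^ (b - a) <= 1) by (apply pow_le_one; lra). nra.
Qed.

Lemma geom_cv K r : 0 <= r < 1 -> Un_cv (fun N => K * r ^ N) 0.
Proof.
  intros Hr eps He. destruct (Req_dec K 0) as [E|E].
  - exists O. intros. unfold R_dist. rewrite E. rewrite Rmult_0_l, Rminus_0_r, Rabs_R0. lra.
  - destruct (pow_lt_1_zero r ltac:(rewrite Rabs_pos_eq; lra) (eps / Rabs K)) as [N HN].
    apply Rdiv_lt_0_compat; auto. apply Rabs_pos_lt; auto.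
    exists N. intros n Hn. specialize (HN n Hn). unfold R_dist. rewrite Rminus_0_r, Rabs_mult.
    pose proof (Rabs_pos_lt K E).
    apply Rlt_le_trans with (Rabs K * (eps / Rabs K)). apply Rmult_lt_compat_l; auto.
    right; field; lra.
Qed.

Lemma abs_nat_pos k : Z.abs_nat (Z.of_nat k) = k.
Proof. apply Zabs2Nat.id. Qed.
Lemma abs_nat_neg k : Z.abs_nat (- Z.of_nat k) = k.
Proof. lia. Qed.
Lemma abs_nat_opp n : Z.abs_nat (- n) = Z.abs_nat n.
Proof. lia. Qed.

Lemma bsR_geom r N : 0 <= r < 1 -> bsR (fun n => r ^ Z.abs_nat n) N = (1 + r - 2 * r ^ (S N)) / (1 - r).
Proof.
  intro Hr. induction N; cbn [bsR].
  - simpl. field. lra.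
  - rewrite IHN, abs_nat_pos, abs_nat_neg. simpl. field. lra.
Qed.

Lemma bsR_geom_le r N : 0 <= r < 1 -> bsR (fun n => r ^ Z.abs_nat n) N <= (1 + r) / (1 - r).
Proof.
  intro Hr. rewrite bsR_geom; auto. pose proof (pow_le r (S N) ltac:(lra)).
  unfold Rdiv. apply Rmult_le_compat_r. left; apply Rinv_0_lt_compat; lra. lra.
Qed.

Definition gdom (u : Z -> Cplx) (C r : R) : Prop :=
  0 <= C /\ 0 < r < 1 /\ forall n, Cnorm (u n) <= C * r ^ Z.abs_nat n.

Lemma bs_tail u C r N M : gdom u C r -> (N <= M)%nat ->
  Cnorm (Csub (bs u M) (bs u N)) <= 2 * C * r ^ (S N) / (1 - r).
Proof.
  intros [HC [Hr Hu]] HNM.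
  assert (forall M, (N <= M)%nat -> Cnorm (Csub (bs u M) (bs u N)) <= 2 * C * (r ^ (S N) - r ^ (S M)) / (1 - r)).
  { intros M0 H. induction H.
    - replace (Csub (bs u N) (bs u N)) with Czero by ring. unfold Czero; rewrite Cnorm_RtoC, Rabs_R0.
      rewrite Rminus_diag. unfold Rdiv. rewrite Rmult_0_r, Rmult_0_l. lra.
    - rewrite bs_S. replace (Csub (Cadd (Cadd (bs u m) (u (Z.of_nat (S m)))) (u (- Z.of_nat (S m))%Z)) (bs u N))
        with (Cadd (Cadd (Csub (bs u m) (bs u N)) (u (Z.of_nat (S m)))) (u (- Z.of_nat (S m))%Z)) by ring.
      eapply Rle_trans. apply Cnorm_tri. eapply Rle_trans. apply Rplus_le_compat_r. apply Cnorm_tri.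
      pose proof (Hu (Z.of_nat (S m))). pose proof (Hu (- Z.of_nat (S m))%Z).
      rewrite abs_nat_pos in H0. rewrite abs_nat_neg in H1.
      apply Rle_trans with (2 * C * (r ^ S N - r ^ S m) / (1 - r) + C * r ^ S m + C * r ^ S m). lra.
      right. simpl. field. lra. }
  eapply Rle_trans. apply H; auto. pose proof (pow_le r (S M) ltac:(lra)).
  unfold Rdiv. apply Rmult_le_compat_r. left; apply Rinv_0_lt_compat; lra. nra.
Qed.

Definition zsum (u : Z -> Cplx) : Cplx := Clim (bs u).

Lemma zsum_cv u C r : gdom u C r -> Ccv (bs u) (zsum u).
Proof.
  intro H. destruct (Ccv_cauchy (bs u) (fun N => (2 * C * r / (1 - r)) * r ^ N)) as [l Hl].
  - apply geom_cv. destruct H as [_ [Hr _]]; lra.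
  - intros N M HNM. eapply Rle_trans. apply (bs_tail u C r); auto. right. simpl. field.
    destruct H as [_ [Hr _]]; lra.
  - unfold zsum. rewrite (Clim_eq _ l); auto.
Qed.

Lemma zsum_tail u C r N : gdom u C r -> Cnorm (Csub (zsum u) (bs u N)) <= 2 * C * r ^ (S N) / (1 - r).
Proof.
  intro H. apply (Ccv_limit_bound (bs u) _ _ _ N). apply (zsum_cv _ C r H).
  intros n Hn. apply (bs_tail u C r); auto.
Qed.

Lemma zsum_bound u C r : gdom u C r -> Cnorm (zsum u) <= 2 * C / (1 - r).
Proof.
  intro H. pose proof (zsum_tail u C r 0 H). destruct H as [HC [Hr Hu]].
  pose proof (Hu 0%Z). simpl in H0. cbn [bs] in H.
  pose proof (Cnorm_tri (Csub (zsum u) (u 0%Z)) (u 0%Z)).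
  replace (Cadd (Csub (zsum u) (u 0%Z)) (u 0%Z)) with (zsum u) in H1 by ring.
  simpl in H. apply Rle_trans with (2 * C * (r * 1) / (1 - r) + C * 1). lra.
  apply Rle_trans with (C * (1 + r) / (1 - r)). right; field; lra.
  unfold Rdiv. apply Rmult_le_compat_r. left; apply Rinv_0_lt_compat; lra. nra.
Qed.

Lemma zsum_eq u C r l : gdom u C r -> Ccv (bs u) l -> zsum u = l.
Proof. intros H Hl. apply (Ccv_unique (bs u)); auto. apply (zsum_cv _ C r H). Qed.

Lemma gdom_mono u C r C' : gdom u C r -> C <= C' -> gdom u C' r.
Proof.
  intros [HC [Hr Hu]] HCC. split. lra. split; auto. intro n. eapply Rle_trans. apply Hu.
  apply Rmult_le_compat_r. apply pow_le; lra. auto.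
Qed.

Lemma gdom_add u v C1 C2 r : gdom u C1 r -> gdom v C2 r -> gdom (fun n => Cadd (u n) (v n)) (C1 + C2) r.
Proof.
  intros [H1 [Hr Hu]] [H2 [_ Hv]]. split. lra. split; auto. intro n.
  eapply Rle_trans. apply Cnorm_tri. pose proof (Hu n); pose proof (Hv n). lra.
Qed.

Lemma gdom_scal c u C r : gdom u C r -> gdom (fun n => Cmul c (u n)) (Cnorm c * C) r.
Proof.
  intros [H1 [Hr Hu]]. pose proof (Cnorm_ge0 c). split. nra. split; auto. intro n.
  rewrite Cnorm_mul, Rmult_assoc. apply Rmult_le_compat_l; auto.
Qed.

Lemma zsum_add u v C1 C2 r : gdom u C1 r -> gdom v C2 r ->
  zsum (fun n => Cadd (u n) (v n)) = Cadd (zsum u) (zsum v).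
Proof.
  intros Hu Hv. apply (zsum_eq _ _ _ _ (gdom_add _ _ _ _ _ Hu Hv)).
  apply (Ccv_ext (fun N => Cadd (bs u N) (bs v N))). intro; rewrite bs_add; auto.
  apply Ccv_add; eapply zsum_cv; eauto.
Qed.

Lemma zsum_scal c u C r : gdom u C r -> zsum (fun n => Cmul c (u n)) = Cmul c (zsum u).
Proof.
  intros Hu. apply (zsum_eq _ _ _ _ (gdom_scal c _ _ _ Hu)).
  apply (Ccv_ext (fun N => Cmul c (bs u N))). intro; rewrite bs_scal; auto.
  apply Ccv_scal; eapply zsum_cv; eauto.
Qed.

Lemma zsum_ext u v C r : gdom u C r -> (forall n, u n = v n) -> zsum u = zsum v.
Proof.
  intros Hu E. symmetry. apply (zsum_eq _ C r). 
  destruct Hu as [a [b c]]. split; auto. split; auto. intro n; rewrite <- E; auto.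
  apply (Ccv_ext (bs u)). intro; apply bs_ext; auto. eapply zsum_cv; eauto.
Qed.

Lemma gdom_refl u C r : gdom u C r -> gdom (fun n => u (- n)%Z) C r.
Proof. intros [a [b c]]. split; auto. split; auto. intro n. rewrite <- abs_nat_opp. apply c. Qed.

Lemma zsum_refl u C r : gdom u C r -> zsum (fun n => u (- n)%Z) = zsum u.
Proof.
  intros Hu. apply (zsum_eq _ _ _ _ (gdom_refl _ _ _ Hu)).
  apply (Ccv_ext (bs u)). intro; rewrite bs_refl; auto. eapply zsum_cv; eauto.
Qed.

Lemma gdom_shift u C r c : gdom u C r -> gdom (fun n => u (n + c)%Z) (C / r ^ Z.abs_nat c) r.
Proof.
  intros [HC [Hr Hu]]. pose proof (pow_lt r (Z.abs_nat c) ltac:(lra)).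
  split. unfold Rdiv; apply Rmult_le_pos; [lra|left; apply Rinv_0_lt_compat; lra]. split; auto. intro n.
  eapply Rle_trans. apply Hu.
  assert (r ^ Z.abs_nat (n + c) * r ^ Z.abs_nat c <= r ^ Z.abs_nat n).
  { rewrite <- pow_add. apply pow_decr. lra. lia. }
  apply Rle_trans with (C * (r ^ Z.abs_nat n / r ^ Z.abs_nat c)).
  apply Rmult_le_compat_l; auto. apply Rmult_le_reg_r with (r ^ Z.abs_nat c); auto.
  unfold Rdiv. rewrite Rmult_assoc, Rinv_l; lra.
  right; unfold Rdiv; ring.
Qed.

Lemma zsum_shift1 u C r : gdom u C r -> zsum (fun n => u (n + 1)%Z) = zsum u.
Proof.
  intros Hu. apply (zsum_eq _ _ _ _ (gdom_shift _ _ _ 1 Hu)).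
  destruct Hu as [HC [Hr Hb]].
  apply (Ccv_by_bound _ _ (fun N => (2 * C * r / (1 - r) + C + C * r) * r ^ N)).
  apply geom_cv; lra.
  intro N. rewrite bs_shift1.
  replace (Csub (Cadd (Csub (bs u N) (u (- Z.of_nat N)%Z)) (u (Z.of_nat N + 1)%Z)) (zsum u))
    with (Cadd (Csub (bs u N) (zsum u)) (Csub (u (Z.of_nat N + 1)%Z) (u (- Z.of_nat N)%Z))) by ring.
  eapply Rle_trans. apply Cnorm_tri. eapply Rle_trans. apply Rplus_le_compat_l. apply Cnorm_tri_sub.
  rewrite Cnorm_sub_sym. pose proof (zsum_tail u C r N (conj HC (conj Hr Hb))).
  pose proof (Hb (Z.of_nat N + 1)%Z). pose proof (Hb (- Z.of_nat N)%Z).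
  replace (Z.of_nat N + 1)%Z with (Z.of_nat (S N)) in * by lia.
  rewrite abs_nat_pos in H0. rewrite abs_nat_neg in H1.
  apply Rle_trans with (2 * C * r ^ S N / (1 - r) + (C * r ^ S N + C * r ^ N)). lra.
  right. simpl. field. lra.
Qed.

Lemma zsum_shift_nat u C r k : gdom u C r -> zsum (fun n => u (n + Z.of_nat k)%Z) = zsum u.
Proof.
  revert u C. induction k; intros u C Hu.
  - symmetry. apply (zsum_ext u _ C r); auto. intro n. f_equal. lia.
  - transitivity (zsum (fun n => (fun m => u (m + 1)%Z) (n + Z.of_nat k)%Z)).
    + apply (zsum_ext _ _ _ r (gdom_shift u C r (Z.of_nat (S k)) Hu)). intro n. f_equal. lia.
    + rewrite (IHk _ _ (gdom_shift u C r 1 Hu)). apply (zsum_shift1 u C r Hu).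
Qed.

Lemma zsum_shift u C r c : gdom u C r -> zsum (fun n => u (n + c)%Z) = zsum u.
Proof.
  intro Hu. destruct (Z_le_dec 0 c) as [Hc|Hc].
  - rewrite <- (zsum_shift_nat u C r (Z.to_nat c) Hu).
    apply (zsum_ext _ _ _ r (gdom_shift u C r c Hu)). intro n. f_equal. lia.
  - set (w := fun m => u (- m)%Z). assert (Hw : gdom w C r) by (apply gdom_refl; auto).
    set (w' := fun m => w (m + Z.of_nat (Z.to_nat (- c)))%Z).
    assert (Hw' : gdom w' (C / r ^ Z.abs_nat (Z.of_nat (Z.to_nat (- c)))) r) by (apply gdom_shift; auto).
    transitivity (zsum (fun n => w' (- n)%Z)).
    + apply (zsum_ext _ _ _ r (gdom_shift u C r c Hu)). intro n. unfold w', w. f_equal. lia.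
    + rewrite (zsum_refl _ _ _ Hw'). unfold w'. rewrite (zsum_shift_nat _ _ _ _ Hw).
      unfold w. apply (zsum_refl _ _ _ Hu).
Qed.

Lemma gdom_even u C r : gdom u C r -> gdom (fun n => CR (1 + sg n) (u n)) (2 * C) r.
Proof.
  intros [HC [Hr Hu]]. split. lra. split; auto. intro n. unfold CR. rewrite Cnorm_mul, Cnorm_RtoC.
  assert (Rabs (1 + sg n) <= 2). { unfold sg; destruct (Z.even n); rewrite Rabs_pos_eq; lra. }
  pose proof (Hu n). pose proof (Cnorm_ge0 (u n)). pose proof (Rabs_pos (1 + sg n)). nra.
Qed.

Lemma gdom_dbl u C r : gdom u C r -> gdom (fun k => u (2 * k)%Z) C r.
Proof.
  intros [HC [Hr Hu]]. split; auto. split; auto. intro n. eapply Rle_trans. apply Hu.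
  apply Rmult_le_compat_l; auto. apply pow_decr. lra. lia.
Qed.

Lemma zsum_even u C r : gdom u C r ->
  zsum (fun n => CR (1 + sg n) (u n)) = CR 2 (zsum (fun k => u (2 * k)%Z)).
Proof.
  intro Hu. apply (Ccv_unique (fun N => bs (fun n => CR (1 + sg n) (u n)) (2 * N))).
  - apply (Ccv_subseq (bs (fun n => CR (1 + sg n) (u n))) _ (fun N => 2 * N)%nat). intro; lia.
    apply (zsum_cv _ _ _ (gdom_even _ _ _ Hu)).
  - apply (Ccv_ext (fun N => CR 2 (bs (fun k => u (2 * k)%Z) N))).
    intro N. destruct (bs_even u N); auto.
    unfold CR. apply Ccv_scal. apply (zsum_cv _ _ _ (gdom_dbl _ _ _ Hu)).
Qed.

Lemma bs_sub u v N : bs (fun n => Csub (u n) (v n)) N = Csub (bs u N) (bs v N).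
Proof. induction N; cbn [bs]; rewrite ?IHN; auto; ring. Qed.

Lemma fubini (G : Z -> Z -> Cplx) C r :
  0 <= C -> 0 < r < 1 -> (forall m k, Cnorm (G m k) <= C * r ^ Z.abs_nat m * r ^ Z.abs_nat k) ->
  zsum (fun m => zsum (G m)) = zsum (fun k => zsum (fun m => G m k)).
Proof.
  intros HC Hr HG.
  assert (Hrow : forall m, gdom (G m) (C * r ^ Z.abs_nat m) r).
  { intro m. split. apply Rmult_le_pos; auto; apply pow_le; lra. split; auto. }
  assert (Hcol : forall k, gdom (fun m => G m k) (C * r ^ Z.abs_nat k) r).
  { intro k. split. apply Rmult_le_pos; auto; apply pow_le; lra. split; auto. intro m.
    eapply Rle_trans. apply HG. right; ring. }
  assert (gen : forall (H : Z -> Z -> Cplx), (forall m k, Cnorm (H m k) <= C * r ^ Z.abs_nat m * r ^ Z.abs_nat k) ->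
     (forall m, gdom (H m) (C * r ^ Z.abs_nat m) r) ->
     Ccv (fun N => bs (fun m => bs (H m) N) N) (zsum (fun m => zsum (H m)))).
  { intros H HH HR.
    assert (HF : gdom (fun m => zsum (H m)) (2 * C / (1 - r)) r).
    { split. unfold Rdiv; apply Rmult_le_pos; [lra | left; apply Rinv_0_lt_compat; lra]. split; auto.
      intro m. eapply Rle_trans. apply (zsum_bound _ _ _ (HR m)). right; field. lra. }
    apply (Ccv_by_bound _ _ (fun N => (2 * (2 * C / (1 - r)) * r / (1 - r) + 2 * C * r / (1 - r) * ((1 + r) / (1 - r))) * r ^ N)).
    apply geom_cv; lra.
    intro N.
    replace (Csub (bs (fun m => bs (H m) N) N) (zsum (fun m => zsum (H m))))
      with (Copp (Cadd (Csub (zsum (fun m => zsum (H m))) (bs (fun m => zsum (H m)) N))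
                       (bs (fun m => Csub (zsum (H m)) (bs (H m) N)) N))).
    2: { rewrite bs_sub. ring. }
    rewrite Cnorm_opp. eapply Rle_trans. apply Cnorm_tri.
    pose proof (zsum_tail _ _ _ N HF).
    assert (Cnorm (bs (fun m => Csub (zsum (H m)) (bs (H m) N)) N) <= 2 * C * r ^ S N / (1 - r) * ((1 + r) / (1 - r))).
    { eapply Rle_trans. apply bs_norm.
      eapply Rle_trans. apply (bsR_le _ (fun m => 2 * C * r ^ S N / (1 - r) * r ^ Z.abs_nat m)).
      intro m. eapply Rle_trans. apply (zsum_tail _ _ _ N (HR m)). right. simpl. field. lra.
      assert (E : forall a (f : Z -> R) N, bsR (fun m => a * f m) N = a * bsR f N).
      { intros a f N0; induction N0; cbn [bsR]; rewrite ?IHN0; ring. }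
      rewrite E. apply Rmult_le_compat_l. unfold Rdiv. apply Rmult_le_pos. 
      apply Rmult_le_pos. lra. apply pow_le; lra. left; apply Rinv_0_lt_compat; lra.
      apply bsR_geom_le; lra. }
    apply Rle_trans with (2 * (2 * C / (1 - r)) * r ^ S N / (1 - r) + 2 * C * r ^ S N / (1 - r) * ((1 + r) / (1 - r))).
    lra. right. simpl. field. lra. }
  apply (Ccv_unique (fun N => bs (fun m => bs (G m) N) N)).
  - apply gen; auto.
  - apply (Ccv_ext (fun N => bs (fun k => bs (fun m => G m k) N) N)).
    intro N. symmetry. apply bs_swap.
    apply gen; auto. intros m k. eapply Rle_trans. apply HG. right; ring.
Qed.

Lemma zsum_mul u v C1 C2 r : gdom u C1 r -> gdom v C2 r ->
  Cmul (zsum u) (zsum v) = zsum (fun m => zsum (fun k => Cmul (u m) (v k))).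
Proof.
  intros Hu Hv.
  rewrite (zsum_ext (fun m => zsum (fun k => Cmul (u m) (v k))) (fun m => Cmul (zsum v) (u m)) (2 * C1 * C2 / (1 - r)) r).
  - rewrite (zsum_scal _ _ _ _ Hu). ring.
  - pose proof (proj1 Hv). destruct Hu as [H1 [Hr Hu]]. split. unfold Rdiv; apply Rmult_le_pos; [nra | left; apply Rinv_0_lt_compat; lra].
    split; auto. intro m. rewrite (zsum_scal _ _ _ _ Hv).
    eapply Rle_trans. rewrite Cnorm_mul. apply Rmult_le_compat_l. apply Cnorm_ge0. apply (zsum_bound _ _ _ Hv).
    pose proof (Hu m). pose proof (Cnorm_ge0 (u m)). 
    apply Rle_trans with (C1 * r ^ Z.abs_nat m * (2 * C2 / (1 - r))). apply Rmult_le_compat_r; auto.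
    unfold Rdiv. apply Rmult_le_pos. destruct Hv; lra. left; apply Rinv_0_lt_compat; lra.
    right; field; lra.
  - intro m. rewrite (zsum_scal _ _ _ _ Hv). ring.
Qed.


Lemma exp_pow x k : exp x ^ k = exp (INR k * x).
Proof. induction k. simpl. rewrite Rmult_0_l, exp_0. auto. rewrite S_INR. simpl. rewrite IHk, <- exp_plus. f_equal. ring. Qed.

Lemma cos_sin_PIn n : cos (PI * IZR n) = sg n /\ sin (PI * IZR n) = 0.
Proof.
  assert (Hnat : forall k, cos (PI * INR k) = sg (Z.of_nat k) /\ sin (PI * INR k) = 0).
  { induction k. simpl. rewrite Rmult_0_r, cos_0, sin_0. auto.
    rewrite S_INR. replace (PI * (INR k + 1)) with (PI * INR k + PI) by ring.
    rewrite neg_cos, neg_sin. destruct IHk as [A B]. rewrite A, B.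
    replace (Z.of_nat (S k)) with (Z.of_nat k + 1)%Z by lia. rewrite sg_add. replace (sg 1) with (-1) by reflexivity. split; ring. }
  destruct (Z_le_dec 0 n).
  - replace n with (Z.of_nat (Z.to_nat n)) by lia. rewrite <- INR_IZR_INZ. apply Hnat.
  - replace n with (- Z.of_nat (Z.to_nat (- n)))%Z by lia. rewrite opp_IZR, <- INR_IZR_INZ, sg_opp.
    replace (PI * - INR (Z.to_nat (- n))) with (- (PI * INR (Z.to_nat (- n)))) by ring.
    rewrite cos_neg, sin_neg. destruct (Hnat (Z.to_nat (- n))) as [A B]. rewrite A, B. split; auto. ring.
Qed.

Lemma exp_le x y : x <= y -> exp x <= exp y.
Proof. intros [H|H]. left; apply exp_increasing; auto. subst; lra. Qed.

Definition tau2 (tau : Cplx) : Cplx := mkC (2 * Re tau) (2 * Im tau).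

Lemma term_norm z tau n :
  Cnorm (theta_term z tau n) = exp (- (PI * IZR n ^ 2 * Im tau) - 2 * PI * IZR n * Im z).
Proof. unfold theta_term. rewrite Cnorm_Cexp. f_equal. simpl. ring. Qed.

Lemma term_bound z tau n : 0 < Im tau -> 0 <= Im z <= Im tau / 4 ->
  Cnorm (theta_term z tau n) <= exp (- (PI * Im tau / 2)) ^ Z.abs_nat n.
Proof.
  intros HT HY. rewrite term_norm, exp_pow. apply exp_le. 
  rewrite INR_IZR_INZ. rewrite Nat2Z.inj_abs_nat.
  assert (E1 : IZR n ^ 2 >= IZR (Z.abs n)).
  { replace (IZR n ^ 2) with (IZR (n * n)) by (rewrite mult_IZR; ring). apply Rle_ge, IZR_le. nia. }
  assert (E2 : - IZR n * Im z <= IZR (Z.abs n) * (Im tau / 4)).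
  { destruct (Z_le_dec 0 n).
    - rewrite Z.abs_eq by lia. assert (0 <= IZR n) by (apply IZR_le; lia). nra.
    - rewrite Z.abs_neq by lia. rewrite opp_IZR. assert (IZR n <= 0) by (apply IZR_le; lia). nra. }
  pose proof PI_RGT_0. assert (0 <= IZR (Z.abs n)) by (apply IZR_le; lia).
  assert (0 <= PI * Im tau * (IZR n ^ 2 - IZR (Z.abs n))) by (apply Rmult_le_pos; nra).
  assert (0 <= PI * (IZR (Z.abs n) * (Im tau / 4) + IZR n * Im z)) by (apply Rmult_le_pos; lra).
  nra.
Qed.

Lemma sqabs (x : Z) : (x*x >= Z.abs x)%Z.
Proof. destruct (Z_le_dec 0 x). rewrite Z.abs_eq by lia. nia. rewrite Z.abs_neq by lia. nia. Qed.
Lemma quad_ineq (m k : Z) : (m*m + (m-2*k)*(m-2*k) >= Z.abs m + Z.abs k)%Z.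
Proof.
  pose proof (sqabs m) as A. pose proof (sqabs (m - 2*k)) as B.
  destruct (Z_le_dec 2 (Z.abs m)). nia.
  assert (m = 0 \/ m = 1 \/ m = -1)%Z as [E|[E|E]] by lia; subst m; nia.
Qed.

Definition rho (T : R) : R := exp (- (PI * T / 2)).

Lemma rho_bounds T : 0 < T -> 0 < rho T < 1.
Proof.
  intro H. unfold rho. split. apply exp_pos. rewrite <- exp_0. apply exp_increasing.
  pose proof PI_RGT_0. nra.
Qed.

Lemma gdom_term z tau : 0 < Im tau -> 0 <= Im z <= Im tau / 4 ->
  gdom (theta_term z tau) 1 (rho (Im tau)).
Proof.
  intros HT HY. split. lra. split. apply rho_bounds; auto. intro n. rewrite Rmult_1_l. apply term_bound; auto.
Qed.

Lemma theta_zsum z tau : 0 < Im tau -> 0 <= Im z <= Im tau / 4 -> theta z tau = zsum (theta_term z tau).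
Proof.
  intros HT HY. unfold theta. apply Clim_eq.
  apply (Ccv_ext (bs (theta_term z tau))). intro N. unfold theta_psum. rewrite psum_bs. auto.
  apply (zsum_cv _ _ _ (gdom_term z tau HT HY)).
Qed.

Lemma term_half z tau n : theta_term (Cadd z (RtoC (1/2))) tau n = CR (sg n) (theta_term z tau n).
Proof.
  unfold theta_term. destruct (cos_sin_PIn n) as [A B].
  replace (Cadd (Cmul (RtoC (PI * IZR n ^ 2)) (Cmul Ci tau)) (Cmul (RtoC (2 * PI * IZR n)) (Cmul Ci (Cadd z (RtoC (1 / 2))))))
    with (Cadd (Cadd (Cmul (RtoC (PI * IZR n ^ 2)) (Cmul Ci tau)) (Cmul (RtoC (2 * PI * IZR n)) (Cmul Ci z))) (mkC 0 (PI * IZR n))).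
  2: { apply Ceq; unfold Cadd, Cmul, RtoC, Ci; simpl; field. }
  rewrite Cexp_add. unfold CR. rewrite (Cring_th.(Rmul_comm) (RtoC (sg n))). f_equal. apply Ceq; unfold Cexp, RtoC; cbn [Re Im]; rewrite ?A, ?B, exp_0; ring.
Qed.

Lemma term_prod z tau a k :
  Cmul (theta_term z tau (a + k)) (theta_term Czero tau (a - k)) =
  Cmul (theta_term z (tau2 tau) a) (theta_term z (tau2 tau) k).
Proof.
  unfold theta_term. rewrite <- !Cexp_add. f_equal.
  apply Ceq; unfold Cadd, Cmul, RtoC, Ci, Czero, tau2; cbn [Re Im]; rewrite ?plus_IZR, ?minus_IZR; simpl; ring.
Qed.

Lemma term_major z tau m k : 0 < Im tau -> 0 <= Im z <= Im tau / 4 ->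
  Cnorm (Cmul (theta_term z tau m) (theta_term Czero tau (m - 2 * k))) <=
  1 * rho (Im tau) ^ Z.abs_nat m * rho (Im tau) ^ Z.abs_nat k.
Proof.
  intros HT HY. rewrite Cnorm_mul, !term_norm. rewrite <- exp_plus. unfold rho. rewrite !exp_pow, Rmult_1_l, <- exp_plus.
  apply exp_le. unfold Czero, RtoC; cbn [Im]. rewrite !INR_IZR_INZ, !Nat2Z.inj_abs_nat.
  pose proof (quad_ineq m k) as Q. apply Z.ge_le, IZR_le in Q.
  repeat rewrite ?plus_IZR, ?mult_IZR, ?minus_IZR in Q.
  assert (E2 : - IZR m * Im z <= IZR (Z.abs m) * (Im tau / 4)).
  { destruct (Z_le_dec 0 m).
    - rewrite Z.abs_eq by lia. assert (0 <= IZR m) by (apply IZR_le; lia). nra.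
    - rewrite Z.abs_neq by lia. rewrite opp_IZR. assert (IZR m <= 0) by (apply IZR_le; lia). nra. }
  pose proof PI_RGT_0. assert (0 <= IZR (Z.abs m)) by (apply IZR_le; lia).
  assert (0 <= IZR (Z.abs k)) by (apply IZR_le; lia).
  rewrite minus_IZR, mult_IZR.
  set (M := IZR m) in *. set (K := IZR k) in *.
  assert (0 <= PI * Im tau * (M * M + (M - 2 * K) * (M - 2 * K) - (IZR (Z.abs m) + IZR (Z.abs k)))) by (apply Rmult_le_pos; nra).
  assert (0 <= PI * (IZR (Z.abs m) * (Im tau / 4) + M * Im z)) by (apply Rmult_le_pos; lra).
  assert (0 <= PI * Im tau * IZR (Z.abs k)) by (apply Rmult_le_pos; nra).
  simpl IZR. nra.
Qed.


Lemma gdom_weight (w : Z -> R) A u C r : 0 <= A -> (forall n, Rabs (w n) <= A) -> gdom u C r ->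
  gdom (fun n => CR (w n) (u n)) (A * C) r.
Proof.
  intros HA Hw [HC [Hr Hu]]. split. nra. split; auto. intro n. unfold CR. rewrite Cnorm_mul, Cnorm_RtoC.
  pose proof (Hw n). pose proof (Hu n). pose proof (Cnorm_ge0 (u n)). pose proof (Rabs_pos (w n)).
  rewrite Rmult_assoc. apply Rmult_le_compat; auto.
Qed.

Lemma sg_abs n : Rabs (sg n) <= 1.
Proof. unfold sg; destruct (Z.even n); unfold Rabs; destruct (Rcase_abs _); lra. Qed.

Lemma gdom_rowG (G : Z -> Z -> Cplx) C r m : 0 <= C -> 0 < r < 1 ->
  (forall m k, Cnorm (G m k) <= C * r ^ Z.abs_nat m * r ^ Z.abs_nat k) -> gdom (G m) (C * r ^ Z.abs_nat m) r.
Proof. intros. split. apply Rmult_le_pos; auto; apply pow_le; lra. split; auto. Qed.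

Lemma gdom_colG (G : Z -> Z -> Cplx) C r k : 0 <= C -> 0 < r < 1 ->
  (forall m k, Cnorm (G m k) <= C * r ^ Z.abs_nat m * r ^ Z.abs_nat k) -> gdom (fun m => G m k) (C * r ^ Z.abs_nat k) r.
Proof. intros. split. apply Rmult_le_pos; auto; apply pow_le; lra. split; auto. intro m.
  eapply Rle_trans. apply H1. right; ring. Qed.

Lemma dup (e f P Q : Z -> Cplx) C r :
  gdom e C r -> gdom f C r -> gdom P C r -> gdom Q C r ->
  (forall m k, Cnorm (Cmul (e m) (f (m - 2 * k)%Z)) <= C * r ^ Z.abs_nat m * r ^ Z.abs_nat k) ->
  (forall a k, Cmul (e (a + k)%Z) (f (a - k)%Z) = Cmul (P a) (Q k)) ->
  zsum (fun m => Cmul (e m) (zsum (fun n => CR (1 + sg m * sg n) (f n)))) = CR 2 (Cmul (zsum P) (zsum Q)).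
Proof.
  intros He Hf HP HQ HG Hprod.
  pose proof He as [HC [Hr _]].
  set (G := fun m k => Cmul (e m) (f (m - 2 * k)%Z)).
  assert (SA : forall m, zsum (fun n => CR (1 + sg m * sg n) (f n)) = CR 2 (zsum (fun k => f (m - 2 * k)%Z))).
  { intro m.
    set (g := fun n => CR (1 + sg m * sg n) (f n)).
    assert (Hg : gdom g (2 * C) r).
    { apply gdom_weight; auto. lra. intro n. pose proof (sg_abs m); pose proof (sg_abs n).
      unfold sg; destruct (Z.even m), (Z.even n); rewrite Rabs_pos_eq; lra. }
    set (u := fun j => f (- j + m)%Z).
    assert (Hu : gdom u (C / r ^ Z.abs_nat m) r).
    { apply (gdom_refl (fun j => f (j + m)%Z)). apply gdom_shift; auto. }
    transitivity (zsum (fun j => CR (1 + sg j) (u j))).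
    - rewrite <- (zsum_refl _ _ _ Hg).
      rewrite <- (zsum_shift _ _ _ (- m) (gdom_refl _ _ _ Hg)).
      apply (zsum_ext _ _ _ r (gdom_shift _ _ _ (- m) (gdom_refl _ _ _ Hg))).
      intro j. unfold g, u. replace (- (j + - m))%Z with (- j + m)%Z by lia. f_equal.
      rewrite sg_add, sg_opp. replace (sg m * (sg j * sg m)) with ((sg m * sg m) * sg j) by ring.
      rewrite sg_sq. ring.
    - rewrite (zsum_even _ _ _ Hu). f_equal. apply (zsum_ext _ _ _ r (gdom_dbl _ _ _ Hu)).
      intro k. unfold u. f_equal. lia. }
  assert (HGr : forall m, gdom (G m) (C * r ^ Z.abs_nat m) r) by (intro m; apply gdom_rowG; auto).
  assert (HGc : forall k, gdom (fun m => G m k) (C * r ^ Z.abs_nat k) r) by (intro k; apply gdom_colG; auto).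
  assert (Hv : gdom (fun m => CR 2 (zsum (G m))) (Cnorm (RtoC 2) * (2 * C / (1 - r))) r).
  { apply gdom_scal. split. unfold Rdiv; apply Rmult_le_pos; [lra | left; apply Rinv_0_lt_compat; lra].
    split; auto. intro m. eapply Rle_trans. apply (zsum_bound _ _ _ (HGr m)). right; field; lra. }
  transitivity (zsum (fun m => CR 2 (zsum (G m)))).
  { symmetry. apply (zsum_ext _ _ _ r Hv). intro m. rewrite SA.
    assert (Hfm : gdom (fun k => f (m - 2 * k)%Z) (C / r ^ Z.abs_nat m) r).
    { assert (H0 : gdom (fun j => f (- j + m)%Z) (C / r ^ Z.abs_nat m) r)
        by (apply (gdom_refl (fun j => f (j + m)%Z)); apply gdom_shift; auto).
      apply gdom_dbl in H0. destruct H0 as [a [b c]]. split; auto. split; auto. intro k. specialize (c k).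
      replace (- (2 * k) + m)%Z with (m - 2 * k)%Z in c by lia. auto. }
    unfold G. rewrite (zsum_scal (e m) _ _ _ Hfm). unfold CR. ring. }
  assert (HF : gdom (fun m => zsum (G m)) (2 * C / (1 - r)) r).
  { split. unfold Rdiv; apply Rmult_le_pos; [lra | left; apply Rinv_0_lt_compat; lra].
    split; auto. intro m. eapply Rle_trans. apply (zsum_bound _ _ _ (HGr m)). right; field; lra. }
  assert (HFc : gdom (fun k => zsum (fun m => G m k)) (2 * C / (1 - r)) r).
  { split. unfold Rdiv; apply Rmult_le_pos; [lra | left; apply Rinv_0_lt_compat; lra].
    split; auto. intro k. eapply Rle_trans. apply (zsum_bound _ _ _ (HGc k)). right; field; lra. }
  unfold CR. rewrite (zsum_scal (RtoC 2) _ _ _ HF). f_equal.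
  rewrite (fubini G C r HC Hr HG).
  transitivity (zsum (fun k => Cmul (zsum P) (Q k))).
  - apply (zsum_ext _ _ _ r HFc). intro k.
    rewrite <- (zsum_shift _ _ _ k (HGc k)).
    transitivity (zsum (fun a => Cmul (Q k) (P a))).
    + apply (zsum_ext _ _ _ r (gdom_shift _ _ _ k (HGc k))). intro a. unfold G.
      replace (a + k - 2 * k)%Z with (a - k)%Z by lia. rewrite Hprod. ring.
    + rewrite (zsum_scal _ _ _ _ HP). ring.
  - rewrite (zsum_scal _ _ _ _ HQ). auto.
Qed.


Lemma gdom_rmono u C r r' : gdom u C r' -> r' <= r -> r < 1 -> gdom u C r.
Proof.
  intros [HC [Hr Hu]] Hrr H1. split; auto. split. lra. intro n. eapply Rle_trans. apply Hu.
  apply Rmult_le_compat_l; auto. apply pow_incr. lra.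
Qed.

Lemma rho_mono T T' : 0 < T -> T <= T' -> rho T' <= rho T.
Proof. intros. unfold rho. apply exp_le. pose proof PI_RGT_0. nra. Qed.

Section Dup.
Variables (z tau : Cplx).
Hypothesis HT : 0 < Im tau.
Hypothesis HY : 0 <= Im z <= Im tau / 4.

Let e := theta_term z tau.
Let f := theta_term Czero tau.
Let p := theta_term z (tau2 tau).
Let r := rho (Im tau).

Lemma HY0 : 0 <= Im Czero <= Im tau / 4.
Proof. unfold Czero, RtoC; simpl. lra. Qed.
Lemma HT2 : 0 < Im (tau2 tau).
Proof. unfold tau2; simpl. lra. Qed.
Lemma HY2 : 0 <= Im z <= Im (tau2 tau) / 4.
Proof. unfold tau2; simpl. lra. Qed.

Lemma ge : gdom e 1 r.
Proof. apply gdom_term; auto. Qed.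
Lemma gf : gdom f 1 r.
Proof. apply gdom_term; auto. apply HY0. Qed.
Lemma gp : gdom p 1 r.
Proof.
  apply (gdom_rmono _ _ _ (rho (Im (tau2 tau)))). apply gdom_term. apply HT2. apply HY2.
  apply rho_mono; auto. unfold tau2; simpl; lra. apply rho_bounds; auto.
Qed.
Lemma gs u C : gdom u C r -> gdom (fun n => CR (sg n) (u n)) C r.
Proof. intro H. rewrite <- (Rmult_1_l C). apply gdom_weight; auto. lra. apply sg_abs. Qed.

Lemma inner_split m : zsum (fun n => CR (1 + sg m * sg n) (f n)) =
  Cadd (zsum f) (Cmul (RtoC (sg m)) (zsum (fun n => CR (sg n) (f n)))).
Proof.
  rewrite <- (zsum_scal _ _ _ _ (gs _ _ gf)). rewrite <- (zsum_add _ _ _ _ _ gf (gdom_scal (RtoC (sg m)) _ _ _ (gs _ _ gf))).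
  symmetry. apply (zsum_ext _ _ _ r (gdom_add _ _ _ _ _ gf (gdom_scal (RtoC (sg m)) _ _ _ (gs _ _ gf)))).
  intro n. unfold CR. apply Ceq; simpl; ring.
Qed.

Lemma theta00_eq w : 0 <= Im w <= Im tau / 4 -> theta00 w tau = zsum (theta_term w tau).
Proof. intro. apply theta_zsum; auto. Qed.

Lemma theta01_eq w : 0 <= Im w <= Im tau / 4 -> theta01 w tau = zsum (fun n => CR (sg n) (theta_term w tau n)).
Proof.
  intro H. unfold theta01. rewrite theta_zsum; auto.
  apply (zsum_ext _ _ 1 r). apply gdom_term; auto. unfold Cadd, RtoC; simpl; lra.
  intro n. apply term_half. unfold Cadd, RtoC; simpl; lra.
Qed.

Lemma dup1 : Cadd (Cmul (theta00 z tau) (theta00 Czero tau)) (Cmul (theta01 z tau) (theta01 Czero tau)) =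
             CR 2 (Cmul (theta00 z (tau2 tau)) (theta00 z (tau2 tau))).
Proof.
  rewrite !theta00_eq, !theta01_eq; auto; try apply HY0.
  change (theta00 z (tau2 tau)) with (theta z (tau2 tau)). rewrite (theta_zsum z (tau2 tau) HT2 HY2). fold e f p.
  rewrite <- (dup e f p p 1 r ge gf gp gp).
  2: { intros m k. apply term_major; auto. }
  2: { intros a k. apply term_prod. }
  set (A := zsum f). set (B := zsum (fun n => CR (sg n) (f n))).
  assert (Hg : gdom (fun m => Cadd (Cmul A (e m)) (Cmul B (CR (sg m) (e m)))) (Cnorm A * 1 + Cnorm B * 1) r).
  { apply gdom_add. apply gdom_scal, ge. apply gdom_scal, gs, ge. }
  rewrite <- (zsum_ext _ (fun m => Cmul (e m) (zsum (fun n => CR (1 + sg m * sg n) (f n)))) _ r Hg).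
  2: { intro m. rewrite inner_split. fold A B. unfold CR. ring. }
  rewrite (zsum_add _ _ _ _ _ (gdom_scal A _ _ _ ge) (gdom_scal B _ _ _ (gs _ _ ge))).
  rewrite (zsum_scal _ _ _ _ ge), (zsum_scal _ _ _ _ (gs _ _ ge)). ring.
Qed.

Lemma dup2 : Cadd (Cmul (theta00 z tau) (theta01 Czero tau)) (Cmul (theta01 z tau) (theta00 Czero tau)) =
             CR 2 (Cmul (theta01 z (tau2 tau)) (theta01 z (tau2 tau))).
Proof.
  rewrite !theta00_eq, !theta01_eq; auto; try apply HY0.
  unfold theta01. rewrite (theta_zsum _ (tau2 tau) HT2).
  2: { pose proof HY2. unfold Cadd, RtoC; simpl; lra. }
  rewrite (zsum_ext (theta_term (Cadd z (RtoC (1/2))) (tau2 tau)) (fun n => CR (sg n) (p n)) 1 r).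
  2: { apply (gdom_rmono _ _ _ (rho (Im (tau2 tau)))). apply gdom_term. apply HT2.
       pose proof HY2. unfold Cadd, RtoC; simpl; lra.
       apply rho_mono; auto. unfold tau2; simpl; lra. apply rho_bounds; auto. }
  2: { intro n. apply term_half. }
  fold e f.
  rewrite <- (dup (fun n => CR (sg n) (e n)) f (fun n => CR (sg n) (p n)) (fun n => CR (sg n) (p n)) 1 r
     (gs _ _ ge) gf (gs _ _ gp) (gs _ _ gp)).
  2: { intros m k. unfold CR. rewrite <- Cring_th.(Rmul_assoc), Cnorm_mul, Cnorm_RtoC.
       pose proof (term_major z tau m k HT HY). fold e f in H. fold r in H.
       pose proof (sg_abs m). pose proof (Cnorm_ge0 (Cmul (e m) (f (m - 2 * k)%Z))). nra. }
  2: { intros a k. unfold CR. rewrite sg_add.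
       replace (Cmul (Cmul (RtoC (sg a * sg k)) (e (a + k)%Z)) (f (a - k)%Z))
         with (Cmul (RtoC (sg a * sg k)) (Cmul (e (a + k)%Z) (f (a - k)%Z))) by ring.
       unfold e, f. rewrite term_prod. fold p. apply Ceq; simpl; ring. }
  set (A := zsum f). set (B := zsum (fun n => CR (sg n) (f n))).
  assert (Hg : gdom (fun m => Cadd (Cmul A (CR (sg m) (e m))) (Cmul B (e m))) (Cnorm A * 1 + Cnorm B * 1) r).
  { apply gdom_add. apply gdom_scal, gs, ge. apply gdom_scal, ge. }
  rewrite <- (zsum_ext _ (fun m => Cmul (CR (sg m) (e m)) (zsum (fun n => CR (1 + sg m * sg n) (f n)))) _ r Hg).
  2: { intro m. rewrite inner_split. fold A B. unfold CR.
       replace (Cmul (Cmul (RtoC (sg m)) (e m)) (Cadd A (Cmul (RtoC (sg m)) B)))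
         with (Cadd (Cmul A (Cmul (RtoC (sg m)) (e m))) (Cmul (Cmul (RtoC (sg m)) (RtoC (sg m))) (Cmul B (e m)))) by ring.
       replace (Cmul (RtoC (sg m)) (RtoC (sg m))) with Cone. ring.
       apply Ceq; unfold Cone, RtoC; simpl; try rewrite sg_sq; ring. }
  rewrite (zsum_add _ _ _ _ _ (gdom_scal A _ _ _ (gs _ _ ge)) (gdom_scal B _ _ _ ge)).
  rewrite (zsum_scal _ _ _ _ ge), (zsum_scal _ _ _ _ (gs _ _ ge)). ring.
Qed.

End Dup.


Lemma num_ineq r : 0 < r <= 0.54 -> r + r^2 + 4 * (r^3)^2 / (1 - r^3) < 1.
Proof.
intros H. assert (H1: r*r <= 0.2916) by nra.
assert (H2: r^3 = r * (r*r)) by ring.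
assert (H3: r^3 <= 0.158) by (rewrite H2; nra).
assert (H4: 0 < r^3) by (rewrite H2; apply Rmult_lt_0_compat; nra).
assert (4 * (r^3)^2 / (1 - r^3) <= 4 * 0.158 * r^3 / 0.842).
{ unfold Rdiv. apply Rle_trans with (4 * (r^3)^2 * / 0.842). apply Rmult_le_compat_l. nra.
  apply Rinv_le_contravar; lra. apply Rmult_le_compat_r. lra. replace ((r^3)^2) with (r^3*r^3) by ring. nra. }
assert (r^3 <= 0.54 * 0.2916) by (rewrite H2; nra).
replace (r^2) with (r*r) by ring. lra.
Qed.

Lemma rho_small T : T >= sqrt 3 / 4 -> rho T <= 0.54.
Proof.
  intro HT. pose proof PI2_3_2 as HPI.
  assert (Hs : 1.732 <= sqrt 3).
  { rewrite <- (sqrt_square 1.732) by lra. apply sqrt_le_1; lra. }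
  set (x := PI * T / 2).
  assert (Hx : 0.6495 <= x).
  { unfold x. assert (T >= 1.732 / 4) by lra. nra. }
  assert (E : exp x >= 1.852).
  { replace x with (INR 8 * (x / 8)) by (simpl; field).
    rewrite <- exp_pow. pose proof (exp_ineq1_le (x / 8)).
    apply Rge_trans with ((1 + x / 8) ^ 8). apply Rle_ge, pow_incr. lra.
    apply Rge_trans with ((1 + 0.6495 / 8) ^ 8). apply Rle_ge, pow_incr. lra. simpl. lra. }
  unfold rho. fold x. rewrite exp_Ropp. 
  apply Rle_trans with (/ 1.852). apply Rinv_le_contravar; lra. lra.
Qed.

Lemma term_bound1 z tau : 0 < Im tau -> 0 <= Im z <= Im tau / 4 ->
  Cnorm (theta_term z tau 1) <= rho (Im tau) ^ 2.
Proof.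
  intros. rewrite term_norm. unfold rho. rewrite exp_pow. apply exp_le. simpl. pose proof PI_RGT_0. nra.
Qed.
Lemma term_boundm1 z tau : 0 < Im tau -> 0 <= Im z <= Im tau / 4 ->
  Cnorm (theta_term z tau (-1)) <= rho (Im tau).
Proof.
  intros. rewrite term_norm. unfold rho. apply exp_le. simpl. pose proof PI_RGT_0. nra.
Qed.
Lemma term_bound2 z tau n : 0 < Im tau -> 0 <= Im z <= Im tau / 4 -> (2 <= Z.abs_nat n)%nat ->
  Cnorm (theta_term z tau n) <= (rho (Im tau) ^ 3) ^ Z.abs_nat n.
Proof.
  intros HT HY Hn. rewrite term_norm. unfold rho. rewrite !exp_pow. apply exp_le.
  rewrite INR_IZR_INZ, Nat2Z.inj_abs_nat. simpl INR.
  assert (E1 : IZR n ^ 2 >= 2 * IZR (Z.abs n)).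
  { replace (IZR n ^ 2) with (IZR (n * n)) by (rewrite mult_IZR; ring).
    replace (2 * IZR (Z.abs n)) with (IZR (2 * Z.abs n)) by (rewrite mult_IZR; ring).
    apply Rle_ge, IZR_le. destruct (Z_le_dec 0 n). rewrite Z.abs_eq by lia. nia. rewrite Z.abs_neq by lia. nia. }
  assert (E2 : - IZR n * Im z <= IZR (Z.abs n) * (Im tau / 4)).
  { destruct (Z_le_dec 0 n).
    - rewrite Z.abs_eq by lia. assert (0 <= IZR n) by (apply IZR_le; lia). nra.
    - rewrite Z.abs_neq by lia. rewrite opp_IZR. assert (IZR n <= 0) by (apply IZR_le; lia). nra. }
  pose proof PI_RGT_0. assert (0 <= IZR (Z.abs n)) by (apply IZR_le; lia).
  assert (0 <= PI * Im tau * (IZR n ^ 2 - 2 * IZR (Z.abs n))) by (apply Rmult_le_pos; nra).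
  assert (0 <= PI * (IZR (Z.abs n) * (Im tau / 4) + IZR n * Im z)) by (apply Rmult_le_pos; lra).
  nra.
Qed.

Lemma bsR_mono h N : (forall n, 0 <= h n) -> forall M, (N <= M)%nat -> bsR h N <= bsR h M.
Proof.
  intros H M HM. induction HM. lra. cbn [bsR]. pose proof (H (Z.of_nat (S m))); pose proof (H (- Z.of_nat (S m))%Z). lra.
Qed.

Lemma bsR_tail2 h D q N : (forall n, 0 <= h n) -> 0 <= D -> 0 <= q < 1 ->
  (forall n, (2 <= Z.abs_nat n)%nat -> h n <= D * q ^ Z.abs_nat n) ->
  bsR h N <= bsR h 1 + 2 * D * q ^ 2 / (1 - q).
Proof.
  intros H0 HD Hq Hb.
  assert (forall M, (1 <= M)%nat -> bsR h M <= bsR h 1 + 2 * D * (q ^ 2 - q ^ (S M)) / (1 - q)).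
  { intros M HM. induction HM.
    - replace (q ^ 2 - q ^ 2) with 0 by ring. unfold Rdiv. rewrite Rmult_0_r, Rmult_0_l. lra.
    - cbn [bsR]. pose proof (Hb (Z.of_nat (S m)) ltac:(lia)). pose proof (Hb (- Z.of_nat (S m))%Z ltac:(lia)).
      rewrite abs_nat_pos in H. rewrite abs_nat_neg in H1.
      apply Rle_trans with (bsR h 1 + 2 * D * (q ^ 2 - q ^ S m) / (1 - q) + D * q ^ S m + D * q ^ S m). lra.
      right. simpl. field. lra. }
  destruct N.
  - pose proof (bsR_mono h 0 H0 1 ltac:(lia)).
    assert (0 <= 2 * D * q ^ 2 / (1 - q)). { unfold Rdiv. apply Rmult_le_pos. apply Rmult_le_pos. lra. apply pow_le; lra. left; apply Rinv_0_lt_compat; lra. }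
    lra.
  - eapply Rle_trans. apply H; lia. pose proof (pow_le q (S (S N)) ltac:(lra)).
    apply Rplus_le_compat_l. unfold Rdiv. apply Rmult_le_compat_r. left; apply Rinv_0_lt_compat; lra. nra.
Qed.

Lemma bs_minus0 u N : Cnorm (Csub (bs u N) (u 0%Z)) <= bsR (fun n => Cnorm (u n)) N - Cnorm (u 0%Z).
Proof.
  induction N; cbn [bs bsR].
  - replace (Csub (u 0%Z) (u 0%Z)) with Czero by ring. unfold Czero; rewrite Cnorm_RtoC, Rabs_R0. lra.
  - replace (Csub (Cadd (Cadd (bs u N) (u (Z.of_nat (S N)))) (u (- Z.of_nat (S N))%Z)) (u 0%Z))
      with (Cadd (Cadd (Csub (bs u N) (u 0%Z)) (u (Z.of_nat (S N)))) (u (- Z.of_nat (S N))%Z)) by ring.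
    eapply Rle_trans. apply Cnorm_tri. eapply Rle_trans. apply Rplus_le_compat_r. apply Cnorm_tri. lra.
Qed.


Lemma Ccv_sub u v a b : Ccv u a -> Ccv v b -> Ccv (fun n => Csub (u n) (v n)) (Csub a b).
Proof.
  intros Hu Hv. replace (Csub a b) with (Cadd a (Cmul (RtoC (-1)) b)) by (apply Ceq; simpl; ring).
  apply (Ccv_ext (fun n => Cadd (u n) (Cmul (RtoC (-1)) (v n)))). intro; apply Ceq; simpl; ring.
  apply Ccv_add; auto. apply Ccv_scal; auto.
Qed.

Lemma term0 w tau : theta_term w tau 0%Z = Cone.
Proof.
  unfold theta_term. replace (Cadd (Cmul (RtoC (PI * IZR 0 ^ 2)) (Cmul Ci tau)) (Cmul (RtoC (2 * PI * IZR 0)) (Cmul Ci w)))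
    with Czero by (apply Ceq; simpl; ring).
  apply Ceq; simpl; rewrite ?exp_0, ?cos_0, ?sin_0; ring.
Qed.

Lemma CR_norm a u : Cnorm (CR a u) = Rabs a * Cnorm u.
Proof. unfold CR. rewrite Cnorm_mul, Cnorm_RtoC. auto. Qed.

Lemma w_minus_bound n : Rabs (1 - sg n) <= 2.
Proof. unfold sg; destruct (Z.even n); unfold Rabs; destruct (Rcase_abs _); lra. Qed.
Lemma w_plus_bound n : Rabs (1 + sg n) <= 2.
Proof. unfold sg; destruct (Z.even n); unfold Rabs; destruct (Rcase_abs _); lra. Qed.

Lemma good_bound w tau : 0 < Im tau -> Im tau >= sqrt 3 / 4 -> 0 <= Im w <= Im tau / 4 ->
  Cnorm (Csub (theta00 w tau) (theta01 w tau)) < Cnorm (Cadd (theta00 w tau) (theta01 w tau)) /\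
  theta00 w tau <> Czero.
Proof.
  intros HT HT2 HY.
  set (e := theta_term w tau). set (r := rho (Im tau)).
  assert (Hr : 0 < r <= 0.54). { split. apply rho_bounds; auto. apply rho_small; auto. }
  assert (He : gdom e 1 r) by (apply gdom_term; auto).
  assert (He' : gdom (fun n => CR (sg n) (e n)) 1 r).
  { rewrite <- (Rmult_1_l 1). apply gdom_weight; auto. lra. apply sg_abs. }
  rewrite (theta00_eq tau HT w HY), (theta01_eq tau HT w HY). fold e.
  set (D := 4 * (r ^ 3) ^ 2 / (1 - r ^ 3)).
  assert (Hr3 : 0 <= r ^ 3 < 1). { split. apply pow_le; lra. replace (r^3) with (r*(r*r)) by ring.
    assert (r * r < 1) by nra. nra. }
  assert (HO : Cnorm (Csub (zsum e) (zsum (fun n => CR (sg n) (e n)))) <= 2 * r + 2 * r ^ 2 + D).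
  { replace (Csub (zsum e) (zsum (fun n => CR (sg n) (e n)))) with (Csub (Csub (zsum e) (zsum (fun n => CR (sg n) (e n)))) Czero) by ring.
    apply (Ccv_limit_bound (fun N => bs (fun n => CR (1 - sg n) (e n)) N) _ _ _ 0).
    - apply (Ccv_ext (fun N => Csub (bs e N) (bs (fun n => CR (sg n) (e n)) N))).
      intro N. rewrite <- bs_sub. apply bs_ext. intro n. unfold CR. apply Ceq; simpl; ring.
      apply Ccv_sub; eapply zsum_cv; eauto.
    - intros N _. replace (Csub (bs (fun n => CR (1 - sg n) (e n)) N) Czero) with (bs (fun n => CR (1 - sg n) (e n)) N) by ring.
      eapply Rle_trans. apply bs_norm.
      eapply Rle_trans. apply (bsR_tail2 _ 2 (r ^ 3)).
      + intro; apply Cnorm_ge0.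
      + lra.
      + lra.
      + intros n Hn. rewrite CR_norm. pose proof (w_minus_bound n). pose proof (term_bound2 w tau n HT HY Hn).
        fold e r in H0. pose proof (Cnorm_ge0 (e n)). pose proof (Rabs_pos (1 - sg n)). nra.
      + cbn [bsR]. simpl Z.of_nat. change (- (1))%Z with (-1)%Z. rewrite !CR_norm.
        replace (sg 0) with 1 by reflexivity. replace (sg 1) with (-1) by reflexivity. replace (sg (-1)) with (-1) by reflexivity.
        replace (1 - 1) with 0 by ring. replace (1 - -1) with 2 by ring. rewrite Rabs_R0, (Rabs_pos_eq 2) by lra.
        pose proof (term_bound1 w tau HT HY). pose proof (term_boundm1 w tau HT HY). fold e r in H, H0.
        unfold D. replace (2 * 2 * (r ^ 3) ^ 2 / (1 - r ^ 3)) with (4 * (r ^ 3) ^ 2 / (1 - r ^ 3)) by (field; lra).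
        pose proof (Cnorm_ge0 (e 0%Z)). lra. }
  assert (HE : Cnorm (Csub (Cadd (zsum e) (zsum (fun n => CR (sg n) (e n)))) (RtoC 2)) <= D).
  { apply (Ccv_limit_bound (fun N => bs (fun n => CR (1 + sg n) (e n)) N) _ _ _ 0).
    - apply (Ccv_ext (fun N => Cadd (bs e N) (bs (fun n => CR (sg n) (e n)) N))).
      intro N. rewrite <- bs_add. apply bs_ext. intro n. unfold CR. apply Ceq; simpl; ring.
      apply Ccv_add; eapply zsum_cv; eauto.
    - intros N _.
      replace (RtoC 2) with (CR (1 + sg 0) (e 0%Z)) by (unfold e; rewrite term0; replace (sg 0) with 1 by reflexivity; apply Ceq; unfold CR, Cone, RtoC; simpl; ring).
      eapply Rle_trans. apply bs_minus0.
      assert (bsR (fun n => Cnorm (CR (1 + sg n) (e n))) N <= bsR (fun n => Cnorm (CR (1 + sg n) (e n))) 1 + 2 * 2 * (r ^ 3) ^ 2 / (1 - r ^ 3)).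
      { apply (bsR_tail2 _ 2 (r ^ 3)).
        + intro; apply Cnorm_ge0.
        + lra.
        + lra.
        + intros n Hn. rewrite CR_norm. pose proof (w_plus_bound n). pose proof (term_bound2 w tau n HT HY Hn).
          fold e r in H0. pose proof (Cnorm_ge0 (e n)). pose proof (Rabs_pos (1 + sg n)). nra. }
      cbn [bsR] in H. simpl Z.of_nat in H. change (- (1))%Z with (-1)%Z in H. rewrite !CR_norm in H.
      replace (sg 1) with (-1) in H by reflexivity. replace (sg (-1)) with (-1) in H by reflexivity.
      replace (1 + -1) with 0 in H by ring. rewrite Rabs_R0 in H.
      unfold D. replace (2 * 2 * (r ^ 3) ^ 2 / (1 - r ^ 3)) with (4 * (r ^ 3) ^ 2 / (1 - r ^ 3)) in H by (field; lra).
      rewrite CR_norm. lra. }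
  pose proof (num_ineq r Hr) as NI. fold D in NI.
  set (A := zsum e) in *. set (B := zsum (fun n => CR (sg n) (e n))) in *.
  assert (HE2 : 2 - D <= Cnorm (Cadd A B)).
  { pose proof (Cnorm_rev (RtoC 2) (Csub (Cadd A B) (RtoC 2))).
    replace (Cadd (RtoC 2) (Csub (Cadd A B) (RtoC 2))) with (Cadd A B) in H by ring.
    rewrite Cnorm_RtoC, Rabs_pos_eq in H by lra. lra. }
  split. lra.
  intro HA. assert (B = Copp (Csub A B)) by (rewrite HA; ring).
  assert (Cadd A B = Copp (Csub A B)) by (rewrite HA; ring).
  rewrite H0, Cnorm_opp in HE2. lra.
Qed.


Lemma Cpow_mul u v n : Cpow (Cmul u v) n = Cmul (Cpow u n) (Cpow v n).
Proof. induction n; simpl. unfold Cone; apply Ceq; simpl; ring. rewrite IHn. ring. Qed.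
Lemma Cpow_add u a b : Cpow u (a + b) = Cmul (Cpow u a) (Cpow u b).
Proof. induction a; simpl. ring. rewrite IHa. ring. Qed.
Lemma Cpow_pow u a b : Cpow (Cpow u a) b = Cpow u (a * b).
Proof. induction b; simpl. rewrite Nat.mul_0_r. auto. rewrite IHb, Nat.mul_succ_r, Nat.add_comm, Cpow_add. auto. Qed.
Lemma Cpow_one n : Cpow Cone n = Cone.
Proof. induction n; simpl; auto. rewrite IHn. ring. Qed.
Lemma Cpow2 u : Cpow u 2 = Cmul u u.
Proof. simpl. ring. Qed.
Lemma Cpow_neq0 u n : u <> Czero -> Cpow u n <> Czero.
Proof. intro H; induction n; simpl. intro E; injection E; lra. apply Cmul_neq0; auto. Qed.

Lemma pow_dist u M : Cnorm (Csub (Cpow u M) Cone) <= (1 + Cnorm (Csub u Cone)) ^ M - 1.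
Proof.
  induction M; simpl.
  - replace (Csub Cone Cone) with Czero by ring. unfold Czero; rewrite Cnorm_RtoC, Rabs_R0. lra.
  - replace (Csub (Cmul u (Cpow u M)) Cone) with (Cadd (Cmul u (Csub (Cpow u M) Cone)) (Csub u Cone)) by ring.
    eapply Rle_trans. apply Cnorm_tri. rewrite Cnorm_mul.
    set (e := Cnorm (Csub u Cone)). assert (Cnorm u <= 1 + e).
    { pose proof (Cnorm_tri (Csub u Cone) Cone). replace (Cadd (Csub u Cone) Cone) with u in H by ring.
      replace (Cnorm Cone) with 1 in H by (unfold Cone; rewrite Cnorm_RtoC, Rabs_R1; auto). unfold e; lra. }
    pose proof (Cnorm_ge0 u). pose proof (Cnorm_ge0 (Csub (Cpow u M) Cone)).
    apply Rle_trans with ((1 + e) * ((1 + e) ^ M - 1) + e). 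
    apply Rplus_le_compat_r. apply Rmult_le_compat; auto. lra.
Qed.

Lemma exp_small d : 0 <= d <= 1/2 -> exp d - 1 <= 2 * d.
Proof.
  intro H. pose proof (exp_ineq1_le (- d)). rewrite exp_Ropp in H0.
  pose proof (exp_pos d). assert (exp d <= / (1 - d)).
  { apply Rmult_le_reg_l with (/ exp d). apply Rinv_0_lt_compat; auto.
    rewrite Rinv_l by lra. apply Rmult_le_reg_r with (1 - d). lra.
    rewrite Rmult_assoc, Rinv_l by lra. lra. }
  assert (/ (1 - d) <= 1 + 2 * d).
  { apply Rmult_le_reg_r with (1 - d). lra. rewrite Rinv_l by lra. nra. }
  lra.
Qed.

Lemma Cpow_cv (u : nat -> Cplx) (M : nat -> nat) (g : nat -> R) :
  Un_cv g 0 -> (forall n, (1 <= n)%nat -> INR (M n) * Cnorm (Csub (u n) Cone) <= g n) ->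
  Ccv (fun n => Cpow (u n) (M n)) Cone.
Proof.
  intros Hg Hb. destruct (Hg (1/2) ltac:(lra)) as [N0 HN0].
  apply (Ccv_by_bound_ev _ _ (fun n => 2 * g n) (max N0 1)).
  - intros eps He. destruct (Hg (eps / 2) ltac:(lra)) as [N HN]. exists N. intros n Hn.
    specialize (HN n Hn). unfold R_dist in *. rewrite Rminus_0_r in *. rewrite Rabs_mult, Rabs_pos_eq by lra. lra.
  - intros n Hn. specialize (HN0 n ltac:(lia)). unfold R_dist in HN0. rewrite Rminus_0_r in HN0.
    apply Rabs_def2 in HN0. specialize (Hb n ltac:(lia)).
    set (e := Cnorm (Csub (u n) Cone)) in *. pose proof (Cnorm_ge0 (Csub (u n) Cone)). fold e in H.
    eapply Rle_trans. apply pow_dist. fold e.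
    assert ((1 + e) ^ M n <= exp (INR (M n) * e)).
    { rewrite <- exp_pow. apply pow_incr. split. lra. pose proof (exp_ineq1_le e). lra. }
    pose proof (pos_INR (M n)).
    assert (0 <= INR (M n) * e) by (apply Rmult_le_pos; lra).
    pose proof (exp_small (INR (M n) * e) ltac:(lra)). lra.
Qed.

Fixpoint taun (tau : Cplx) (n : nat) : Cplx :=
  match n with O => tau | S k => tau2 (taun tau k) end.

Lemma Im_taun tau n : Im (taun tau n) = 2 ^ n * Im tau.
Proof. induction n; simpl. ring. unfold tau2. simpl. rewrite IHn. ring. Qed.

Lemma rho_taun tau n : rho (Im (taun tau n)) = rho (Im tau) ^ (2 ^ n).
Proof. unfold rho. rewrite exp_pow, Im_taun, pow_INR. replace (INR 2) with 2 by (simpl; ring). f_equal. field. Qed.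

Lemma theta_near1 w tau : 0 < Im tau -> 0 <= Im w <= Im tau / 4 ->
  Cnorm (Csub (theta00 w tau) Cone) <= 2 * rho (Im tau) / (1 - rho (Im tau)).
Proof.
  intros HT HY. rewrite (theta00_eq tau HT w HY).
  pose proof (zsum_tail _ _ _ 0 (gdom_term w tau HT HY)). cbn [bs] in H. rewrite term0 in H.
  simpl in H. rewrite Rmult_1_r, Rmult_1_r in H. auto.
Qed.

Lemma geo2 r n : 0 < r <= 1 -> (1 <= n)%nat -> 2 ^ n * r ^ (2 ^ n) <= (2 * r ^ 2) ^ n.
Proof.
  intros Hr Hn. induction Hn.
  - simpl. lra.
  - assert (E : (2 ^ S m = 2 ^ m + 2 ^ m)%nat) by (simpl; lia).
    rewrite E, pow_add. 
    assert (r ^ (2 ^ m) <= r ^ 2). { apply pow_decr. lra. clear -Hn. induction Hn; simpl; lia. }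
    pose proof (pow_le r (2 ^ m) ltac:(lra)). pose proof (pow_le 2 m ltac:(lra)).
    replace (2 ^ S m * (r ^ 2 ^ m * r ^ 2 ^ m)) with (2 * (2 ^ m * r ^ 2 ^ m) * r ^ 2 ^ m) by (simpl; ring).
    replace ((2 * r ^ 2) ^ S m) with (2 * (2 * r ^ 2) ^ m * r ^ 2) by (simpl; ring).
    pose proof (pow_le (2 * r ^ 2) m ltac:(nra)).
    apply Rmult_le_compat. nra. lra. lra. auto.
Qed.


Lemma two_neq0 : RtoC 2 <> Czero.
Proof. intro H; injection H; lra. Qed.

Lemma good_pair_shape c A B sa sb : c <> Czero -> A <> Czero -> Cnorm (Csub A B) < Cnorm (Cadd A B) ->
  good_pair (Cmul c (Cmul A A)) (Cmul c (Cmul B B)) sa sb -> sb = Cmul sa (Cdiv B A).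
Proof.
  intros Hc HA HAB [E1 [E2 [_ G]]].
  set (zeta := Cdiv sa A).
  assert (Hz : Cmul zeta zeta = c).
  { unfold zeta. apply (f_equal (fun w => Cdiv w (Cmul A A))) in E1.
    replace (Cdiv (Cmul sa sa) (Cmul A A)) with (Cmul (Cdiv sa A) (Cdiv sa A)) in E1 by (field; auto).
    rewrite E1. field; auto. }
  assert (Hz0 : zeta <> Czero). { intro H. rewrite H in Hz. apply Hc. rewrite <- Hz. ring. }
  assert (Hsa : sa = Cmul zeta A) by (unfold zeta; field; auto).
  assert (Cmul sb sb = Cmul (Cmul zeta B) (Cmul zeta B)).
  { rewrite E2, <- Hz. ring. }
  destruct (sq_eq_cases _ _ H) as [Hb|Hb].
  - rewrite Hb, Hsa. field; auto.
  - exfalso. rewrite Hsa, Hb in G.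
    replace (Csub (Cmul zeta A) (Copp (Cmul zeta B))) with (Cmul zeta (Cadd A B)) in G by ring.
    replace (Cadd (Cmul zeta A) (Copp (Cmul zeta B))) with (Cmul zeta (Csub A B)) in G by ring.
    rewrite !Cnorm_mul in G. pose proof (Cnorm_pos _ Hz0).
    assert (Cnorm zeta * Cnorm (Csub A B) < Cnorm zeta * Cnorm (Cadd A B)) by (apply Rmult_lt_compat_l; auto).
    destruct G as [G|[G _]]; lra.
Qed.

Lemma step_alg A B A0 B0 P Q P0 Q0 sx sy sz st mu :
  A <> Czero -> A0 <> Czero ->
  Cadd (Cmul A A0) (Cmul B B0) = CR 2 (Cmul P P) ->
  Cadd (Cmul A B0) (Cmul B A0) = CR 2 (Cmul Q Q) ->
  Cadd (Cmul A0 A0) (Cmul B0 B0) = CR 2 (Cmul P0 P0) ->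
  Cadd (Cmul A0 B0) (Cmul B0 A0) = CR 2 (Cmul Q0 Q0) ->
  sy = Cmul sx (Cdiv B A) -> st = Cmul sz (Cdiv B0 A0) -> Cmul sz sz = Cmul mu (Cmul A0 A0) ->
  half (Cadd (Cmul sx sz) (Cmul sy st)) = Cmul (Cdiv (Cmul sx sz) (Cmul A A0)) (Cmul P P) /\
  half (Cadd (Cmul sx st) (Cmul sy sz)) = Cmul (Cdiv (Cmul sx sz) (Cmul A A0)) (Cmul Q Q) /\
  half (Cadd (Cmul mu (Cmul A0 A0)) (Cmul mu (Cmul B0 B0))) = Cmul mu (Cmul P0 P0) /\
  Cmul sz st = Cmul mu (Cmul Q0 Q0).
Proof.
  intros HA HA0 D1 D2 D3 D4 Ey Et Ez. pose proof two_neq0.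
  assert (HP : Cmul P P = Cdiv (Cadd (Cmul A A0) (Cmul B B0)) (RtoC 2)) by (rewrite D1; unfold CR; field; auto).
  assert (HQ : Cmul Q Q = Cdiv (Cadd (Cmul A B0) (Cmul B A0)) (RtoC 2)) by (rewrite D2; unfold CR; field; auto).
  assert (HP0 : Cmul P0 P0 = Cdiv (Cadd (Cmul A0 A0) (Cmul B0 B0)) (RtoC 2)) by (rewrite D3; unfold CR; field; auto).
  assert (HQ0 : Cmul Q0 Q0 = Cdiv (Cadd (Cmul A0 B0) (Cmul B0 A0)) (RtoC 2)) by (rewrite D4; unfold CR; field; auto).
  unfold half. rewrite HP, HQ, HP0, HQ0, Ey, Et. repeat split. all: try (field; auto).
  - replace (Cmul sz (Cmul sz (Cdiv B0 A0))) with (Cmul (Cmul sz sz) (Cdiv B0 A0)) by ring.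
    rewrite Ez. replace (RtoC 2) with (Cadd Cone Cone) by (apply Ceq; unfold Cone, RtoC; simpl; ring).
    field. split; auto. intro E. apply H. rewrite <- E. apply Ceq; unfold Cone, RtoC; simpl; ring.
Qed.


Definition sgnv (y : R) : R := if Rlt_dec y 0 then -1 else 1.

Definition csqrt (a : Cplx) : Cplx :=
  mkC (sqrt ((Cnorm a + Re a) / 2)) (sgnv (Im a) * sqrt ((Cnorm a - Re a) / 2)).

Lemma csqrt_sq a : Cmul (csqrt a) (csqrt a) = a.
Proof.
  pose proof (Cnorm_Re a) as H1. pose proof (Cnorm_sq a) as H2. pose proof (Cnorm_ge0 a).
  unfold csqrt. set (r := Cnorm a) in *. destruct a as [u v]. cbn [Re Im] in *.
  assert (Hp : 0 <= (r + u) / 2) by (unfold Rabs in H1; destruct (Rcase_abs u); lra).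
  assert (Hm : 0 <= (r - u) / 2) by (unfold Rabs in H1; destruct (Rcase_abs u); lra).
  assert (Hs : sgnv v * sgnv v = 1) by (unfold sgnv; destruct (Rlt_dec v 0); lra).
  assert (Hprod : sqrt ((r + u) / 2) * sqrt ((r - u) / 2) = Rabs v / 2).
  { rewrite <- sqrt_mult by auto.
    replace ((r + u) / 2 * ((r - u) / 2)) with (Rsqr (v / 2)) by (unfold Rsqr; field_simplify; nra).
    rewrite sqrt_Rsqr_abs. unfold Rdiv. rewrite Rabs_mult, (Rabs_pos_eq (/ 2)) by lra. auto. }
  assert (Hv : sgnv v * Rabs v = v) by (unfold sgnv, Rabs; destruct (Rlt_dec v 0), (Rcase_abs v); lra).
  apply Ceq; cbn [Cmul Re Im].
  - replace (sqrt ((r + u) / 2) * sqrt ((r + u) / 2)) with ((r + u) / 2) by (rewrite sqrt_sqrt; auto).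
    replace (sgnv v * sqrt ((r - u) / 2) * (sgnv v * sqrt ((r - u) / 2))) with
      ((sgnv v * sgnv v) * (sqrt ((r - u) / 2) * sqrt ((r - u) / 2))) by ring.
    rewrite Hs, sqrt_sqrt by auto. field.
  - replace (sqrt ((r + u) / 2) * (sgnv v * sqrt ((r - u) / 2)) + sgnv v * sqrt ((r - u) / 2) * sqrt ((r + u) / 2))
      with (2 * sgnv v * (sqrt ((r + u) / 2) * sqrt ((r - u) / 2))) by ring.
    rewrite Hprod. replace (2 * sgnv v * (Rabs v / 2)) with (sgnv v * Rabs v) by field. exact Hv.
Qed.

Lemma csqrt_re a : Re (csqrt a) >= 0.
Proof. unfold csqrt; simpl. apply Rle_ge, sqrt_pos. Qed.


Section Main.
Variables z tau lam mu : Cplx.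
Hypothesis HT : Im tau > 0.
Hypothesis HT2 : Im tau >= sqrt 3 / 4.
Hypothesis HY : 0 <= Im z <= Im tau / 4.
Hypothesis Hlam : lam <> Czero.
Hypothesis Hmu : mu <> Czero.

Let A n := theta00 z (taun tau n).
Let B n := theta01 z (taun tau n).
Let A0 n := theta00 Czero (taun tau n).
Let B0 n := theta01 Czero (taun tau n).

Lemma cond n : 0 < Im (taun tau n) /\ Im (taun tau n) >= sqrt 3 / 4 /\
  0 <= Im z <= Im (taun tau n) / 4 /\ 0 <= Im Czero <= Im (taun tau n) / 4.
Proof.
  rewrite Im_taun. assert (1 <= 2 ^ n) by (apply pow_R1_Rle; lra).
  unfold Czero, RtoC; simpl Im. repeat split; nra.
Qed.

Lemma goodA n : Cnorm (Csub (A n) (B n)) < Cnorm (Cadd (A n) (B n)) /\ A n <> Czero.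
Proof. destruct (cond n) as [a [b [c d]]]. apply good_bound; auto. Qed.
Lemma goodA0 n : Cnorm (Csub (A0 n) (B0 n)) < Cnorm (Cadd (A0 n) (B0 n)) /\ A0 n <> Czero.
Proof. destruct (cond n) as [a [b [c d]]]. apply good_bound; auto. Qed.

Lemma step n c x y zz t x' y' z' t' : c <> Czero ->
  x = Cmul c (Cmul (A n) (A n)) -> y = Cmul c (Cmul (B n) (B n)) ->
  zz = Cmul mu (Cmul (A0 n) (A0 n)) -> t = Cmul mu (Cmul (B0 n) (B0 n)) ->
  good_step x y zz t x' y' z' t' ->
  exists c', c' <> Czero /\ Cmul c' c' = Cmul c mu /\
    x' = Cmul c' (Cmul (A (S n)) (A (S n))) /\ y' = Cmul c' (Cmul (B (S n)) (B (S n))) /\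
    z' = Cmul mu (Cmul (A0 (S n)) (A0 (S n))) /\ t' = Cmul mu (Cmul (B0 (S n)) (B0 (S n))).
Proof.
  intros Hc Ex Ey Ez Et [sx [sy [sz [st [G1 [G2 [Ex' [Ey' [Ez' Et']]]]]]]]].
  subst x y zz t.
  destruct (goodA n) as [GA HA]. destruct (goodA0 n) as [GA0 HA0].
  pose proof (good_pair_shape _ _ _ _ _ Hc HA GA G1) as Hsy.
  pose proof (good_pair_shape _ _ _ _ _ Hmu HA0 GA0 G2) as Hst.
  destruct G1 as [Sx _]. destruct G2 as [Sz _].
  destruct (cond n) as [a [b [c0 d]]].
  destruct (step_alg (A n) (B n) (A0 n) (B0 n) (A (S n)) (B (S n)) (A0 (S n)) (B0 (S n)) sx sy sz st mu HA HA0
     (dup1 z _ a c0) (dup2 z _ a c0) (dup1 Czero _ a d) (dup2 Czero _ a d) Hsy Hst Sz) as [X1 [X2 [X3 X4]]].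
  set (c' := Cdiv (Cmul sx sz) (Cmul (A n) (A0 n))).
  assert (Hcc : Cmul c' c' = Cmul c mu).
  { unfold c'. replace (Cmul (Cdiv (Cmul sx sz) (Cmul (A n) (A0 n))) (Cdiv (Cmul sx sz) (Cmul (A n) (A0 n))))
      with (Cdiv (Cmul (Cmul sx sx) (Cmul sz sz)) (Cmul (Cmul (A n) (A n)) (Cmul (A0 n) (A0 n)))) by (field; auto).
    rewrite Sx, Sz. field. auto. }
  exists c'. split.
  { intro H0. rewrite H0 in Hcc. apply (Cmul_neq0 c mu Hc Hmu). rewrite <- Hcc. ring. }
  split; auto. rewrite Ex', Ey', Ez', Et'. auto.
Qed.

Definition Inv (x y zz t : nat -> Cplx) n c : Prop :=
  c <> Czero /\ Cmul (Cpow c (2 ^ n)) mu = Cmul lam (Cpow mu (2 ^ n)) /\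
  x n = Cmul c (Cmul (A n) (A n)) /\ y n = Cmul c (Cmul (B n) (B n)) /\
  zz n = Cmul mu (Cmul (A0 n) (A0 n)) /\ t n = Cmul mu (Cmul (B0 n) (B0 n)).

Lemma inv_all x y zz t :
  good_F_seq (Cmul lam (Cpow (theta00 z tau) 2)) (Cmul lam (Cpow (theta01 z tau) 2))
             (Cmul mu (Cpow (theta00 Czero tau) 2)) (Cmul mu (Cpow (theta01 Czero tau) 2)) x y zz t ->
  forall n, exists c, Inv x y zz t n c.
Proof.
  intros [E0 [E1 [E2 [E3 Hs]]]] n. induction n.
  - exists lam. unfold Inv. rewrite E0, E1, E2, E3, !Cpow2. repeat split; auto. simpl. ring.
  - destruct IHn as [c [Hc [Hp [Hx [Hy [Hz Ht]]]]]].
    destruct (step n c _ _ _ _ _ _ _ _ Hc Hx Hy Hz Ht (Hs n)) as [c' [Hc' [Hcc [X [Y [Z0 T0]]]]]].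
    exists c'. unfold Inv. repeat split; auto.
    rewrite Nat.pow_succ_r', <- Cpow_pow, Cpow2, Hcc, Cpow_mul.
    replace (Cmul (Cmul (Cpow c (2 ^ n)) (Cpow mu (2 ^ n))) mu) with (Cmul (Cmul (Cpow c (2 ^ n)) mu) (Cpow mu (2 ^ n))) by ring.
    rewrite Hp, <- Cpow_pow, Cpow2, Cpow_mul. ring.
Qed.

Lemma rho_facts : 0 < rho (Im tau) <= 0.54.
Proof. split. apply rho_bounds; lra. apply rho_small; auto. Qed.

Lemma near1_gen w n : 0 <= Im w <= Im tau / 4 ->
  Cnorm (Csub (theta00 w (taun tau n)) Cone) <= 5 * rho (Im tau) ^ (2 ^ n).
Proof.
  intro Hw. destruct (cond n) as [a [b [c d]]].
  assert (Hw' : 0 <= Im w <= Im (taun tau n) / 4).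
  { rewrite Im_taun. assert (1 <= 2 ^ n) by (apply pow_R1_Rle; lra). split. lra. nra. }
  pose proof (theta_near1 w (taun tau n) a Hw'). rewrite rho_taun in H.
  destruct rho_facts as [r0 r1]. set (r := rho (Im tau)) in *.
  assert (r ^ (2 ^ n) <= r).
  { rewrite <- (pow_1 r) at 2. apply pow_decr. lra. pose proof (Nat.pow_nonzero 2 n). lia. }
  pose proof (pow_le r (2 ^ n) ltac:(lra)).
  eapply Rle_trans. apply H. apply Rmult_le_reg_r with (1 - r ^ (2 ^ n)). lra.
  unfold Rdiv. rewrite Rmult_assoc, Rinv_l by lra. nra.
Qed.

Lemma lim_part x y zz t :
  good_F_seq (Cmul lam (Cpow (theta00 z tau) 2)) (Cmul lam (Cpow (theta01 z tau) 2))
             (Cmul mu (Cpow (theta00 Czero tau) 2)) (Cmul mu (Cpow (theta01 Czero tau) 2)) x y zz t ->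
  exists zinf L : Cplx,
      Ccv zz zinf /\ zinf <> Czero /\
      Ccv (fun n => Cpow (Cdiv (x n) zinf) (2 ^ n)) L /\
      lam = Cmul zinf L /\ mu = zinf.
Proof.
  intro HF. pose proof (inv_all x y zz t HF) as HI.
  destruct rho_facts as [r0 r1]. set (r := rho (Im tau)) in *.
  exists mu, (Cdiv lam mu). split; [|split; [auto|split; [|split; [field; auto|auto]]]].
  - apply (Ccv_ext (fun n => Cmul mu (Cpow (A0 n) 2))).
    { intro n. destruct (HI n) as [c [_ [_ [_ [_ [Hz _]]]]]]. rewrite Hz, Cpow2. auto. }
    cut (Ccv (fun n => Cmul mu (Cpow (A0 n) 2)) (Cmul mu Cone)).
    { intro Hc. replace (Cmul mu Cone) with mu in Hc by ring. exact Hc. }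
    apply Ccv_scal.
    apply (Cpow_cv _ _ (fun n => 10 * r ^ n)). apply geom_cv; lra.
    intros n _. simpl INR. pose proof (near1_gen Czero n ltac:(unfold Czero, RtoC; simpl; lra)).
    fold r in H. assert (r ^ (2 ^ n) <= r ^ n). { apply pow_decr. lra. apply Nat.lt_le_incl, Nat.pow_gt_lin_r; lia. }
    unfold A0. lra.
  - apply (Ccv_ext (fun n => Cmul (Cdiv lam mu) (Cpow (A n) (2 ^ S n)))).
    { intro n. destruct (HI n) as [c [Hc [Hp [Hx _]]]]. rewrite Hx.
      set (K := (2 ^ n)%nat) in *.
      replace (Cdiv (Cmul c (Cmul (A n) (A n))) mu) with (Cmul (Cmul c (Cinv mu)) (Cpow (A n) 2)) by (unfold Cdiv; rewrite Cpow2; ring).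
      rewrite Cpow_mul, Cpow_pow, Cpow_mul.
      assert (HIv : Cmul (Cpow (Cinv mu) K) (Cpow mu K) = Cone).
      { rewrite <- Cpow_mul. replace (Cmul (Cinv mu) mu) with Cone by (field; auto). apply Cpow_one. }
      assert (Hck : Cmul (Cpow c K) (Cpow (Cinv mu) K) = Cdiv lam mu).
      { replace (Cmul (Cpow c K) (Cpow (Cinv mu) K)) with (Cdiv (Cmul (Cmul (Cpow c K) mu) (Cpow (Cinv mu) K)) mu) by (field; auto).
        rewrite Hp. unfold Cdiv. replace (Cmul (Cmul lam (Cpow mu K)) (Cpow (Cinv mu) K)) with (Cmul lam (Cmul (Cpow (Cinv mu) K) (Cpow mu K))) by ring.
        rewrite HIv. ring. }
      rewrite Hck. unfold K. rewrite Nat.pow_succ_r'. reflexivity. }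
    cut (Ccv (fun n => Cmul (Cdiv lam mu) (Cpow (A n) (2 ^ S n))) (Cmul (Cdiv lam mu) Cone)).
    { intro Hc. replace (Cmul (Cdiv lam mu) Cone) with (Cdiv lam mu) in Hc by ring. exact Hc. }
    apply Ccv_scal.
    apply (Cpow_cv _ _ (fun n => 10 * (2 * r ^ 2) ^ n)). apply geom_cv.
    split. nra. assert (r * r <= 0.2916) by nra. simpl. lra.
    intros n Hn. pose proof (near1_gen z n HY). fold r in H. unfold A.
    rewrite pow_INR. replace (INR 2) with 2 by (simpl; ring).
    pose proof (geo2 r n ltac:(lra) Hn). pose proof (Cnorm_ge0 (Csub (theta00 z (taun tau n)) Cone)).
    pose proof (pow_le 2 n ltac:(lra)).
    replace (2 ^ S n) with (2 * 2 ^ n) by (simpl; ring).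
    apply Rle_trans with (2 * 2 ^ n * (5 * r ^ 2 ^ n)). apply Rmult_le_compat_l; nra. nra.
Qed.

Fixpoint cseq (n : nat) : Cplx :=
  match n with
  | O => lam
  | S k => Cdiv (Cmul (csqrt (Cmul (cseq k) (Cmul (A k) (A k)))) (csqrt (Cmul mu (Cmul (A0 k) (A0 k)))))
                (Cmul (A k) (A0 k))
  end.

Lemma sq_neq0 s a : Cmul s s = a -> a <> Czero -> s <> Czero.
Proof. intros E Ha Hs. apply Ha. rewrite <- E, Hs. ring. Qed.

Lemma cseq_neq0 n : cseq n <> Czero.
Proof.
  induction n; simpl; auto.
  destruct (goodA n) as [_ HA]. destruct (goodA0 n) as [_ HA0].
  assert (H1 : csqrt (Cmul (cseq n) (Cmul (A n) (A n))) <> Czero).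
  { apply (sq_neq0 _ _ (csqrt_sq _)). apply Cmul_neq0; auto. apply Cmul_neq0; auto. }
  assert (H2 : csqrt (Cmul mu (Cmul (A0 n) (A0 n))) <> Czero).
  { apply (sq_neq0 _ _ (csqrt_sq _)). apply Cmul_neq0; auto. apply Cmul_neq0; auto. }
  unfold Cdiv. apply Cmul_neq0. apply Cmul_neq0; auto.
  intro E. assert (Cmul (Cinv (Cmul (A n) (A0 n))) (Cmul (A n) (A0 n)) = Cone) by (field; auto).
  rewrite E in H. assert (Cone = Czero) by (rewrite <- H; ring). injection H0. lra.
Qed.

Lemma good_pair_build c a b s : c <> Czero -> a <> Czero -> Cnorm (Csub a b) < Cnorm (Cadd a b) ->
  Cmul s s = Cmul c (Cmul a a) -> Re s >= 0 ->
  good_pair (Cmul c (Cmul a a)) (Cmul c (Cmul b b)) s (Cmul s (Cdiv b a)).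
Proof.
  intros Hc Ha Hab Hs Hre. assert (Hs0 : s <> Czero).
  { apply (sq_neq0 _ _ Hs). apply Cmul_neq0; auto. apply Cmul_neq0; auto. }
  split; auto. split.
  { replace (Cmul (Cmul s (Cdiv b a)) (Cmul s (Cdiv b a))) with (Cdiv (Cmul (Cmul s s) (Cmul b b)) (Cmul a a)) by (field; auto).
    rewrite Hs. field; auto. }
  split; auto. left.
  replace (Csub s (Cmul s (Cdiv b a))) with (Cmul (Cdiv s a) (Csub a b)) by (field; auto).
  replace (Cadd s (Cmul s (Cdiv b a))) with (Cmul (Cdiv s a) (Cadd a b)) by (field; auto).
  rewrite !Cnorm_mul. apply Rmult_lt_compat_l; auto.
  rewrite Cnorm_div; auto. apply Rdiv_lt_0_compat; apply Cnorm_pos; auto.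
Qed.

Lemma exist_part : exists x y zz t : nat -> Cplx,
  good_F_seq (Cmul lam (Cpow (theta00 z tau) 2)) (Cmul lam (Cpow (theta01 z tau) 2))
             (Cmul mu (Cpow (theta00 Czero tau) 2)) (Cmul mu (Cpow (theta01 Czero tau) 2)) x y zz t.
Proof.
  exists (fun n => Cmul (cseq n) (Cmul (A n) (A n))), (fun n => Cmul (cseq n) (Cmul (B n) (B n))),
         (fun n => Cmul mu (Cmul (A0 n) (A0 n))), (fun n => Cmul mu (Cmul (B0 n) (B0 n))).
  split; [cbn [cseq]; rewrite Cpow2; reflexivity|].
  split; [cbn [cseq]; rewrite Cpow2; reflexivity|].
  split; [cbn [cseq]; rewrite Cpow2; reflexivity|].
  split; [cbn [cseq]; rewrite Cpow2; reflexivity|].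
  intro n.
  destruct (goodA n) as [GA HA]. destruct (goodA0 n) as [GA0 HA0].
  destruct (cond n) as [a [b [c0 d]]].
  set (sx := csqrt (Cmul (cseq n) (Cmul (A n) (A n)))).
  set (sz := csqrt (Cmul mu (Cmul (A0 n) (A0 n)))).
  exists sx, (Cmul sx (Cdiv (B n) (A n))), sz, (Cmul sz (Cdiv (B0 n) (A0 n))).
  destruct (step_alg (A n) (B n) (A0 n) (B0 n) (A (S n)) (B (S n)) (A0 (S n)) (B0 (S n)) sx
     (Cmul sx (Cdiv (B n) (A n))) sz (Cmul sz (Cdiv (B0 n) (A0 n))) mu HA HA0
     (dup1 z _ a c0) (dup2 z _ a c0) (dup1 Czero _ a d) (dup2 Czero _ a d) eq_refl eq_refl (csqrt_sq _)) as [X1 [X2 [X3 X4]]].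
  split. apply good_pair_build; auto. apply cseq_neq0. apply csqrt_sq. apply csqrt_re.
  split. apply good_pair_build; auto. apply csqrt_sq. apply csqrt_re.
  split. rewrite X1. reflexivity.
  split. rewrite X2. reflexivity.
  split. rewrite X3. reflexivity.
  rewrite X4. reflexivity.
Qed.

Theorem part1 :
  Finf_eq (Cmul lam (Cpow (theta00 z tau) 2)) (Cmul lam (Cpow (theta01 z tau) 2))
          (Cmul mu (Cpow (theta00 Czero tau) 2)) (Cmul mu (Cpow (theta01 Czero tau) 2))
          lam mu.
Proof. split. apply exist_part. intros x y zz t H. exact (lim_part x y zz t H). Qed.

End Main.


Lemma Cinv_neq0 u : u <> Czero -> Cinv u <> Czero.
Proof. intros H E. assert (Cmul (Cinv u) u = Cone) by (field; auto). rewrite E in H0.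
  assert (Cone = Czero) by (rewrite <- H0; ring). injection H1; lra. Qed.

Theorem mainTheorem10 (tau z lam mu : Cplx)
  (Htau : Im tau > 0) (Htau2 : Im tau >= sqrt 3 / 4)
  (Hz1 : 0 <= Im z) (Hz2 : Im z <= Im tau / 4)
  (Hlam : lam <> Czero) (Hmu : mu <> Czero) :
  Finf_eq (Cmul lam (Cpow (theta00 z tau) 2)) (Cmul lam (Cpow (theta01 z tau) 2))
          (Cmul mu (Cpow (theta00 Czero tau) 2)) (Cmul mu (Cpow (theta01 Czero tau) 2))
          lam mu
  /\
  Finf_eq Cone (Cdiv (Cpow (theta01 z tau) 2) (Cpow (theta00 z tau) 2))
          Cone (Cdiv (Cpow (theta01 Czero tau) 2) (Cpow (theta00 Czero tau) 2))
          (Cinv (Cpow (theta00 z tau) 2)) (Cinv (Cpow (theta00 Czero tau) 2)).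
Proof.
  assert (HY : 0 <= Im z <= Im tau / 4) by lra.
  split. exact (part1 z tau lam mu Htau Htau2 HY Hlam Hmu).
  destruct (good_bound z tau Htau Htau2 HY) as [_ HA].
  destruct (good_bound Czero tau Htau Htau2 ltac:(unfold Czero, RtoC; simpl; lra)) as [_ HA0].
  assert (HA2 : Cpow (theta00 z tau) 2 <> Czero) by (apply Cpow_neq0; auto).
  assert (HA02 : Cpow (theta00 Czero tau) 2 <> Czero) by (apply Cpow_neq0; auto).
  pose proof (part1 z tau _ _ Htau Htau2 HY (Cinv_neq0 _ HA2) (Cinv_neq0 _ HA02)) as P.
  replace (Cmul (Cinv (Cpow (theta00 z tau) 2)) (Cpow (theta00 z tau) 2)) with Cone in P by (field; auto).
  replace (Cmul (Cinv (Cpow (theta00 Czero tau) 2)) (Cpow (theta00 Czero tau) 2)) with Cone in P by (field; auto).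
  replace (Cmul (Cinv (Cpow (theta00 z tau) 2)) (Cpow (theta01 z tau) 2))
    with (Cdiv (Cpow (theta01 z tau) 2) (Cpow (theta00 z tau) 2)) in P by (unfold Cdiv; ring).
  replace (Cmul (Cinv (Cpow (theta00 Czero tau) 2)) (Cpow (theta01 Czero tau) 2))
    with (Cdiv (Cpow (theta01 Czero tau) 2) (Cpow (theta00 Czero tau) 2)) in P by (unfold Cdiv; ring).
  exact P.
Qed.
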